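(* For each positive integer $k$, let $z_k$ be the optimal value of the program \[ \max \frac{\sum_{j=1}^k \alpha_j}{f+\sum_{j=1}^k d_j}\ \text{ s.t. } \alpha_j\le\alpha_{j+1}\ (1\le j<k);\ \sqrt{\alpha_j}\le\sqrt{\alpha_l}+\sqrt{d_j}+\sqrt{d_l}\ (1\le j,l\le k);\ \sum_{l=j}^k\max(\alpha_j-d_l,0)\le f\ (1\le j\le k);\ \alpha_j,d_j,f\ge0. \] Then $\sup_{k \ge 1} z_k \le 2.87$.
   Context: The maximum is taken over feasible points with $f+\sum_j d_j>0$. *)

(* Defs.v *)
From HB Require Import structures.
From mathcomp Require Import all_boot all_order all_algebra.
From mathcomp Require Import reals.
Set Implicit Arguments. Unset Strict Implicit. Unset Printing Implicit Defensive.
Import Order.TTheory GRing.Theory Num.Theory.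
Local Open Scope ring_scope.

(* Variables alpha_1..alpha_k, d_1..d_k are the values a 1 .. a k, d 1 .. d k
   of functions nat -> R (values outside 1..k are irrelevant). *)
Definition feasible (R : realType) (k : nat) (a d : nat -> R) (f : R) : Prop :=
  [/\ (forall j : nat, (1 <= j)%N -> (j < k)%N -> a j <= a j.+1),
      (forall j l : nat, (1 <= j <= k)%N -> (1 <= l <= k)%N ->
          Num.sqrt (a j) <= Num.sqrt (a l) + Num.sqrt (d j) + Num.sqrt (d l)),
      (forall j : nat, (1 <= j <= k)%N ->
          \sum_(j <= l < k.+1) Num.max (a j - d l) 0 <= f),
      (forall j : nat, (1 <= j <= k)%N -> 0 <= a j /\ 0 <= d j)
    & 0 <= f].

Definition objective (R : realType) (k : nat) (a d : nat -> R) (f : R) : R :=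
  (\sum_(1 <= j < k.+1) a j) / (f + \sum_(1 <= j < k.+1) d j).

(* Main.v *)
Require Import Defs.
From Stdlib Require Import ZArith.
From HB Require Import structures.
From mathcomp Require Import all_boot all_order all_algebra.
From mathcomp Require Import reals.
From mathcomp Require Import zify ssrZ ring lra.
Import Order.TTheory GRing.Theory Num.Theory.
Local Open Scope ring_scope.
Delimit Scope Z_scope with ZZ.

Section Z2R.
Variable R : realFieldType.
Definition zR_def (z : Z) : R := (int_of_Z z)%:~R.
Fact zR_key : unit. Proof. by []. Qed.
Definition zR := locked_with zR_key zR_def.
Lemma zRE z : zR z = (int_of_Z z)%:~R. Proof. by rewrite /zR unlock. Qed.
Lemma zR_add a b : zR (a + b)%ZZ = zR a + zR b.
Proof. rewrite !zRE -intrD; congr intr. exact: (rmorphD int_of_Z a b). Qed.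
Lemma zR_mul a b : zR (a * b)%ZZ = zR a * zR b.
Proof. rewrite !zRE -intrM; congr intr. exact: (rmorphM int_of_Z a b). Qed.
Lemma zR_sub a b : zR (a - b)%ZZ = zR a - zR b.
Proof. rewrite !zRE -intrB; congr intr. exact: (rmorphB int_of_Z a b). Qed.
Lemma zR0 : zR 0 = 0. Proof. by rewrite zRE. Qed.
Lemma zR_opp a : zR (- a)%ZZ = - zR a.
Proof. rewrite !zRE -mulrNz; congr intr. exact: (rmorphN int_of_Z a). Qed.
Lemma zR_ge0 a : (0 <=? a)%ZZ -> 0 <= zR a.
Proof. rewrite zRE. by case: a => //= p _; rewrite ?ler0z. Qed.
Lemma zR_le a b : (a <=? b)%ZZ -> zR a <= zR b.
Proof. move=> h; rewrite -subr_ge0 -zR_sub; apply: zR_ge0; lia. Qed.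
Lemma zR_lt a b : (a <? b)%ZZ -> zR a < zR b.
Proof. move=> h; rewrite -subr_gt0 -zR_sub.
have : (0 < b - a)%ZZ by lia. rewrite zRE. case: (b-a)%ZZ => //= p _. rewrite ltr0z. lia. Qed.
End Z2R.
Section Q.
Variable R : realFieldType.
Definition Rq (Gm KK D w : R) := Gm * (w - D) ^+ 2 + KK - D * w ^+ 2.
Lemma quad_piece (Gm KK D p q w : R) : 0 < D -> p <= w -> w <= q ->
  0 <= Rq Gm KK D p -> 0 <= Rq Gm KK D q ->
  (Gm - D <= 0 \/ (0 < Gm - D /\
     (Gm * Gm * (D * D) <= (Gm - D) * (Gm * (D * D) + KK) \/
      Gm * D <= (Gm - D) * p \/ (Gm - D) * q <= Gm * D))) ->
  0 <= Rq Gm KK D w.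
Proof.
move=> D0 pw wq Rp Rqq [A0|[A0 [H|[H|H]]]].
- have E : (q - p) * Rq Gm KK D w = (q - w) * Rq Gm KK D p + (w - p) * Rq Gm KK D q
            + (q - p) * (Gm - D) * (w - p) * (w - q).
    by rewrite /Rq; ring.
  case: (ltrP p q) => pq.
  + have : 0 <= (q - p) * Rq Gm KK D w.
      rewrite E.
      have h1 : 0 <= (q - w) * Rq Gm KK D p by apply: mulr_ge0; lra.
      have h2 : 0 <= (w - p) * Rq Gm KK D q by apply: mulr_ge0; lra.
      have h3 : 0 <= (q - p) * (Gm - D) * (w - p) * (w - q).
        rewrite -mulrA -mulrA. apply: mulr_ge0; first lra.
        apply: mulr_le0; first lra. apply: mulr_ge0_le0; lra.
      lra.
    rewrite pmulr_rge0 //; lra.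
  + have -> : w = p by lra. done.
- have E : (Gm - D) * Rq Gm KK D w = ((Gm - D) * w - Gm * D) ^+ 2
     + ((Gm - D) * (Gm * (D * D) + KK) - Gm * Gm * (D * D)).
    by rewrite /Rq; ring.
  have : 0 <= (Gm - D) * Rq Gm KK D w.
    rewrite E; apply: addr_ge0; [exact: sqr_ge0 | lra].
  by rewrite pmulr_rge0.
- have E : Rq Gm KK D w = Rq Gm KK D p + (w - p) * ((Gm - D) * (w + p) - 2 * Gm * D).
    by rewrite /Rq; ring.
  rewrite E; apply: addr_ge0 => //; apply: mulr_ge0; first lra.
  have : (Gm - D) * p <= (Gm - D) * w by rewrite ler_pM2l.
  lra.
- have E : Rq Gm KK D w = Rq Gm KK D q + (q - w) * (2 * Gm * D - (Gm - D) * (w + q)).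
    by rewrite /Rq; ring.
  rewrite E; apply: addr_ge0 => //; apply: mulr_ge0; first lra.
  have : (Gm - D) * w <= (Gm - D) * q by rewrite ler_pM2l.
  lra.
Qed.
End Q.
Arguments Rq {R}.
Arguments quad_piece {R Gm KK D p q w}.

Definition sel (D p q : Z) (x : Z * Z * Z) : bool :=
  [&& Z.leb 0 x.1.1, Z.leb x.1.1 p, Z.leb (p - D)%ZZ x.1.1, Z.leb (D - p)%ZZ x.1.1,
      Z.leb (q - D)%ZZ x.1.1, Z.leb (D - q)%ZZ x.1.1 & Z.leb 0 x.1.2].
Definition sumZ {T : Type} (f : T -> Z) (s : seq T) : Z :=
  foldr (fun x acc => (f x + acc)%ZZ) 0%ZZ s.
Definition piece_ok (D G : Z) (atoms : seq (Z * Z * Z)) (p q : Z) : bool :=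
  let S := filter (sel D p q) atoms in
  let Gm := (G - sumZ (fun x => x.1.2) S)%ZZ in
  let KK := sumZ (fun x => x.2) S in
  let A := (Gm - D)%ZZ in
  [&& Z.leb p q, Z.leb 0 (Gm * ((p - D) * (p - D)) + KK - D * (p * p))%ZZ,
      Z.leb 0 (Gm * ((q - D) * (q - D)) + KK - D * (q * q))%ZZ &
      (Z.leb A 0 || (Z.ltb 0 A && [|| Z.leb (Gm * Gm * (D * D))%ZZ (A * (Gm * (D * D) + KK))%ZZ,
          Z.leb (Gm * D)%ZZ (A * p)%ZZ | Z.leb (A * q)%ZZ (Gm * D)%ZZ]))].
Fixpoint chk (D G : Z) (atoms : seq (Z * Z * Z)) (p : Z) (l : seq Z) : bool :=
  match l with [::] => true | q :: l' => piece_ok D G atoms p q && chk D G atoms q l' end.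
Definition atom_ok (x : Z * Z * Z) : bool :=
  [&& Z.leb 0 x.1.1, Z.leb 0 x.1.2 & Z.eqb x.2 (x.1.2 * x.1.1 * x.1.1)%ZZ].

Section Sound.
Variable R : realFieldType.
Variables (D G : Z) (atoms : seq (Z * Z * Z)).
Hypothesis D0 : (0 <? D)%ZZ.
Hypothesis Y0 : all atom_ok atoms.
Local Notation zr := (zR R).
Definition ar (x : Z * Z * Z) : R := zr x.1.1 / zr D.
Definition mr (x : Z * Z * Z) : R := zr x.1.2 / zr D.
Definition term (u : R) (x : Z * Z * Z) : R :=
  mr x * (if ar x <= u then Num.max (ar x ^+ 2 - (u - 1) ^+ 2) 0 else 0).
Definition Core (u : R) : Prop :=
  u ^+ 2 <= zr G / zr D * (u - 1) ^+ 2 + \sum_(x <- atoms) term u x.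

Lemma zR_sumZ T (f : T -> Z) s : zr (sumZ f s) = \sum_(x <- s) zr (f x).
Proof. elim: s => [|x s IH]; first by rewrite big_nil /= zR0. by rewrite big_cons /= zR_add IH. Qed.

Lemma Dpos : 0 < zr D. Proof. by have := @zR_lt R 0%ZZ D D0; rewrite zR0. Qed.

Lemma mr_ge0 x : x \in atoms -> 0 <= mr x.
Proof.
move=> xa; rewrite /mr divr_ge0 //; last exact: ltW Dpos.
apply: zR_ge0. by case/and3P: (allP Y0 x xa).
Qed.

Lemma ar_ge0 x : x \in atoms -> 0 <= ar x.
Proof.
move=> xa; rewrite /ar divr_ge0 //; last exact: ltW Dpos.
apply: zR_ge0. by case/and3P: (allP Y0 x xa).
Qed.

Lemma term_ge0 u x : x \in atoms -> 0 <= term u x.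
Proof.
move=> xa; rewrite /term; apply: mulr_ge0; first exact: mr_ge0.
by case: ifP => _ //; rewrite le_max lexx orbT.
Qed.

Lemma sq_le (a x : R) : a <= x -> - a <= x -> a ^+ 2 <= x ^+ 2.
Proof. move=> h1 h2; rewrite !expr2; nra. Qed.

Lemma piece_sound p q : piece_ok D G atoms p q ->
  forall u, zr p / zr D <= u -> u <= zr q / zr D -> Core u.
Proof.
rewrite /piece_ok.
set S := filter _ atoms; set SY := sumZ _ S; set KK := sumZ _ S.
move=> /and4P [pq Hp Hq HA] u pu uq.
have Dp := Dpos.
have Dn0 : zr D != 0 by rewrite gt_eqF.
set e := (u - 1) ^+ 2.
have sumge : \sum_(x <- S) mr x * (ar x ^+ 2 - e) <= \sum_(x <- atoms) term u x.
  have -> : \sum_(x <- S) mr x * (ar x ^+ 2 - e) = \sum_(x <- S) term u x.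
    apply: eq_big_seq => x; rewrite mem_filter => /andP [sx _].
    move: sx => /and5P [x0 xp h1 h2 /and3P [h3 h4 y0]].
    have arx : ar x <= u.
      apply: le_trans pu; rewrite /ar ler_pM2r ?invr_gt0 //; exact: zR_le.
    have eb : e <= ar x ^+ 2.
      have h1' : (zr p - zr D) ^+ 2 <= zr x.1.1 ^+ 2.
        apply: sq_le; first by rewrite -zR_sub; apply: zR_le.
        by rewrite opprB -zR_sub; apply: zR_le.
      have h2' : (zr q - zr D) ^+ 2 <= zr x.1.1 ^+ 2.
        apply: sq_le; first by rewrite -zR_sub; apply: zR_le.
        by rewrite opprB -zR_sub; apply: zR_le.
      have E1 : (zr p / zr D - 1) ^+ 2 <= ar x ^+ 2.
        have -> : zr p / zr D - 1 = (zr p - zr D) / zr D by field.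
        by rewrite /ar !expr_div_n ler_pM2r // invr_gt0 exprn_gt0.
      have E2 : (zr q / zr D - 1) ^+ 2 <= ar x ^+ 2.
        have -> : zr q / zr D - 1 = (zr q - zr D) / zr D by field.
        by rewrite /ar !expr_div_n ler_pM2r // invr_gt0 exprn_gt0.
      rewrite /e; case: (lerP u 1) => u1.
      - apply: le_trans E1; rewrite !expr2; nra.
      - apply: le_trans E2; rewrite !expr2; nra.
    rewrite /term arx; congr (_ * _).
    by apply/esym/max_idPl; rewrite subr_ge0.
  rewrite big_filter [X in _ <= X](bigID (sel D p q)) /= lerDl.
  rewrite big_seq_cond; apply: sumr_ge0 => x /andP [xa _]; exact: term_ge0.
have sumE : \sum_(x <- S) mr x * (ar x ^+ 2 - e) = zr KK / zr D ^+ 3 - zr SY / zr D * e.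
  rewrite /KK /SY !zR_sumZ !mulr_suml -sumrB; apply: eq_big_seq => x.
  rewrite mem_filter => /andP [_ xa].
  case/and3P: (allP Y0 x xa) => _ _ /Z.eqb_spec ->.
  rewrite /mr /ar !zR_mul; field; exact: Dn0.
have pw : zr p <= u * zr D by rewrite -ler_pdivrMr.
have wq : u * zr D <= zr q by rewrite -ler_pdivlMr.
have transf : forall z : Z, (0 <=? z)%ZZ -> 0 <= zr z by move=> z; exact: zR_ge0.
have Rp : 0 <= Rq (zr G - zr SY) (zr KK) (zr D) (zr p).
  move: (transf _ Hp); rewrite !(zR_add, zR_sub, zR_mul) /Rq.
  by rewrite !expr2.
have Rqq : 0 <= Rq (zr G - zr SY) (zr KK) (zr D) (zr q).
  move: (transf _ Hq); rewrite !(zR_add, zR_sub, zR_mul) /Rq.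
  by rewrite !expr2.
have HA' : (zr G - zr SY) - zr D <= 0 \/ (0 < (zr G - zr SY) - zr D /\
     ((zr G - zr SY) * (zr G - zr SY) * (zr D * zr D) <= ((zr G - zr SY) - zr D) * ((zr G - zr SY) * (zr D * zr D) + zr KK) \/
      (zr G - zr SY) * zr D <= ((zr G - zr SY) - zr D) * zr p \/ ((zr G - zr SY) - zr D) * zr q <= (zr G - zr SY) * zr D)).
  case/orP: HA => [h|/andP [h1 h2]].
    by left; move: (@zR_le R _ _ h); rewrite !(zR_add, zR_sub, zR_mul) zR0.
  right; split; first by move: (@zR_lt R _ _ h1); rewrite !(zR_add, zR_sub, zR_mul) zR0.
  case/or3P: h2 => h.
  - by left; move: (@zR_le R _ _ h); rewrite !(zR_add, zR_sub, zR_mul).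
  - by right; left; move: (@zR_le R _ _ h); rewrite !(zR_add, zR_sub, zR_mul).
  - by right; right; move: (@zR_le R _ _ h); rewrite !(zR_add, zR_sub, zR_mul).
have Q := quad_piece Dp pw wq Rp Rqq HA'.
have h' : zr D ^+ 3 * u ^+ 2 <= zr D ^+ 3 * ((zr G - zr SY) / zr D * e + zr KK / zr D ^+ 3).
  have -> : zr D ^+ 3 * ((zr G - zr SY) / zr D * e + zr KK / zr D ^+ 3)
            = (zr G - zr SY) * zr D ^+ 2 * e + zr KK by field.
  move: Q; rewrite /Rq /e.
  have -> : (u * zr D - zr D) ^+ 2 = zr D ^+ 2 * (u - 1) ^+ 2 by ring.
  have -> : zr D * (u * zr D) ^+ 2 = zr D ^+ 3 * u ^+ 2 by ring.
  move=> Q. rewrite mulrA in Q. lra.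
have h : u ^+ 2 <= (zr G - zr SY) / zr D * e + zr KK / zr D ^+ 3.
  by move: h'; rewrite ler_pM2l // exprn_gt0.
rewrite /Core -/e.
move: h sumge; rewrite sumE !mulrBl.
lra.
Qed.

Lemma chk_sound p l : chk D G atoms p l ->
  forall u, zr p / zr D < u -> u <= zr (last p l) / zr D -> Core u.
Proof.
elim: l p => [|q l IH] p /=; first by move=> _ u h1 h2; exfalso; lra.
move=> /andP [hp hc] u h1 h2.
case: (lerP u (zr q / zr D)) => hu.
  exact: (@piece_sound p q hp u (ltW h1) hu).
exact: (IH q hc u hu h2).
Qed.
End Sound.
Definition Dz : Z := 100000000%ZZ.
Definition Gz : Z := 287000000%ZZ.
Definition atoms : seq (Z * Z * Z) := [::
(62875000, 1546670, 6114397344218750000000)%ZZ;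
(63000000, 1614478, 6407863182000000000000)%ZZ;
(63125000, 1591334, 6341093021093750000000)%ZZ;
(63250000, 1568743, 6275854417937500000000)%ZZ;
(63375000, 1546686, 6212095150218750000000)%ZZ;
(63500000, 1525146, 6149769958500000000000)%ZZ;
(63625000, 1504106, 6088832602906250000000)%ZZ;
(63750000, 1483551, 6029243985937500000000)%ZZ;
(63875000, 1463464, 5970955986625000000000)%ZZ;
(64000000, 1443832, 5913935872000000000000)%ZZ;
(64125000, 1424641, 5858146052015625000000)%ZZ;
(64250000, 1405875, 5803539867187500000000)%ZZ;
(64375000, 1387524, 5750094576562500000000)%ZZ;
(64500000, 1369574, 5697770233500000000000)%ZZ;
(64625000, 1352013, 5646534418078125000000)%ZZ;
(64750000, 1334829, 5596354009312500000000)%ZZ;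
(64875000, 1318012, 5547203598937500000000)%ZZ;
(65000000, 1301550, 5499048750000000000000)%ZZ;
(65125000, 1285434, 5451867037406250000000)%ZZ;
(65250000, 1269653, 5405627000812500000000)%ZZ;
(65375000, 1254198, 5360305074093750000000)%ZZ;
(65500000, 1239060, 5315877165000000000000)%ZZ;
(65625000, 1224229, 5272314345703125000000)%ZZ;
(65750000, 1209697, 5229595737062500000000)%ZZ;
(65875000, 1195457, 5187704330515625000000)%ZZ;
(66000000, 1181499, 5146609644000000000000)%ZZ;
(66125000, 1167816, 5106293707125000000000)%ZZ;
(66250000, 1154401, 5066738139062500000000)%ZZ;
(66375000, 1141247, 5027924146359375000000)%ZZ;
(66500000, 1128346, 4989828098500000000000)%ZZ;
(66625000, 1115692, 4952434759187500000000)%ZZ;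
(66750000, 1103279, 4915728539437500000000)%ZZ;
(66875000, 1091099, 4879684551171875000000)%ZZ;
(67000000, 1079148, 4844295372000000000000)%ZZ;
(67125000, 1067419, 4809539837671875000000)%ZZ;
(67250000, 1055907, 4775405401687500000000)%ZZ;
(67375000, 1044606, 4741874683218750000000)%ZZ;
(67500000, 1033510, 4708929937500000000000)%ZZ;
(67625000, 1022615, 4676562200234375000000)%ZZ;
(67750000, 1011916, 4644757684750000000000)%ZZ;
(67875000, 1001408, 4613502303000000000000)%ZZ;
(68000000, 991086, 4582781664000000000000)%ZZ;
(68125000, 980946, 4552585713281250000000)%ZZ;
(68250000, 970983, 4522899500437500000000)%ZZ;
(68375000, 961193, 4493712442765625000000)%ZZ;
(68500000, 951572, 4465013717000000000000)%ZZ;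
(68625000, 942116, 4436792258062500000000)%ZZ;
(68750000, 932822, 4409041484375000000000)%ZZ;
(68875000, 923684, 4381740407562500000000)%ZZ;
(69000000, 914700, 4354886700000000000000)%ZZ;
(69125000, 905867, 4328473146921875000000)%ZZ;
(69250000, 897180, 4302482763750000000000)%ZZ;
(69375000, 888637, 4276912686328125000000)%ZZ;
(69500000, 880233, 4251745448250000000000)%ZZ;
(69625000, 871967, 4226982652859375000000)%ZZ;
(69750000, 863835, 4202611264687500000000)%ZZ;
(69875000, 855834, 4178622877406250000000)%ZZ;
(70000000, 847961, 4155008900000000000000)%ZZ;
(70125000, 840213, 4131760555828125000000)%ZZ;
(70250000, 832587, 4108868881687500000000)%ZZ;
(70375000, 825082, 4086334632156250000000)%ZZ;
(70500000, 817694, 4064143603500000000000)%ZZ;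
(70625000, 810421, 4042291308203125000000)%ZZ;
(70750000, 803261, 4020773139312500000000)%ZZ;
(70875000, 796210, 3999574323281250000000)%ZZ;
(71000000, 789267, 3978694947000000000000)%ZZ;
(71125000, 782430, 3958129987968750000000)%ZZ;
(71250000, 775696, 3937869225000000000000)%ZZ;
(71375000, 769063, 3917907337234375000000)%ZZ;
(71500000, 762529, 3898238880250000000000)%ZZ;
(71625000, 756093, 3878863415578125000000)%ZZ;
(71750000, 749751, 3859765007437500000000)%ZZ;
(71875000, 743503, 3840948115234375000000)%ZZ;
(72000000, 737346, 3822401664000000000000)%ZZ;
(72125000, 731278, 3804119582218750000000)%ZZ;
(72250000, 725299, 3786106111187500000000)%ZZ;
(72375000, 719405, 3768344556328125000000)%ZZ;
(72500000, 713595, 3750833718750000000000)%ZZ;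
(72625000, 707869, 3733577617328125000000)%ZZ;
(72750000, 702223, 3716559116437500000000)%ZZ;
(72875000, 696657, 3699782048015625000000)%ZZ;
(73000000, 691169, 3683239601000000000000)%ZZ;
(73125000, 685757, 3666924833203125000000)%ZZ;
(73250000, 680421, 3650841401812500000000)%ZZ;
(73375000, 675158, 3634976826593750000000)%ZZ;
(73500000, 669967, 3619329225750000000000)%ZZ;
(73625000, 664848, 3603902078250000000000)%ZZ;
(73750000, 659798, 3588682559375000000000)%ZZ;
(73875000, 654816, 3573668551500000000000)%ZZ;
(74000000, 649901, 3558857876000000000000)%ZZ;
(74125000, 645052, 3544248292937500000000)%ZZ;
(74250000, 640268, 3529837500750000000000)%ZZ;
(74375000, 635547, 3515617604296875000000)%ZZ;
(74500000, 630889, 3501591672250000000000)%ZZ;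
(74625000, 626292, 3487751647312500000000)%ZZ;
(74750000, 621755, 3474094922187500000000)%ZZ;
(74875000, 617277, 3460618826203125000000)%ZZ;
(75000000, 612857, 3447320625000000000000)%ZZ;
(75125000, 608493, 3434191876453125000000)%ZZ;
(75250000, 604186, 3421240986625000000000)%ZZ;
(75375000, 599934, 3408459403218750000000)%ZZ;
(75500000, 595736, 3395844134000000000000)%ZZ;
(75625000, 591592, 3383397840625000000000)%ZZ;
(75750000, 587499, 3371105980687500000000)%ZZ;
(75875000, 583458, 3358976822531250000000)%ZZ;
(76000000, 579467, 3347001392000000000000)%ZZ;
(76125000, 575526, 3335182162593750000000)%ZZ;
(76250000, 571633, 3323509989062500000000)%ZZ;
(76375000, 567789, 3311993082328125000000)%ZZ;
(76500000, 563991, 3300616329750000000000)%ZZ;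
(76625000, 560240, 3289387883750000000000)%ZZ;
(76750000, 556535, 3278304200937500000000)%ZZ;
(76875000, 552875, 3267361669921875000000)%ZZ;
(77000000, 549258, 3256550682000000000000)%ZZ;
(77125000, 545685, 3245879327578125000000)%ZZ;
(77250000, 542155, 3235343847187500000000)%ZZ;
(77375000, 538667, 3224940412296875000000)%ZZ;
(77500000, 535220, 3214665125000000000000)%ZZ;
(77625000, 531814, 3204520043343750000000)%ZZ;
(77750000, 528448, 3194501188000000000000)%ZZ;
(77875000, 525121, 3184604509515625000000)%ZZ;
(78000000, 521833, 3174831972000000000000)%ZZ;
(78125000, 518584, 3165185546875000000000)%ZZ;
(78250000, 515371, 3155648843687500000000)%ZZ;
(78375000, 512196, 3146235957562500000000)%ZZ;
(78500000, 509058, 3136942660500000000000)%ZZ;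
(78625000, 505955, 3127758471171875000000)%ZZ;
(78750000, 502887, 3118685160937500000000)%ZZ;
(78875000, 499854, 3109724507718750000000)%ZZ;
(79000000, 496856, 3100878296000000000000)%ZZ;
(79125000, 493891, 3092135795296875000000)%ZZ;
(79250000, 490959, 3083498684437500000000)%ZZ;
(79375000, 488060, 3074968648437500000000)%ZZ;
(79500000, 485194, 3066547378500000000000)%ZZ;
(79625000, 482359, 3058223891734375000000)%ZZ;
(79750000, 479555, 3049999772187500000000)%ZZ;
(79875000, 476782, 3041876609718750000000)%ZZ;
(80000000, 474039, 3033849600000000000000)%ZZ;
(80125000, 471327, 3025926704484375000000)%ZZ;
(80250000, 468644, 3018096650250000000000)%ZZ;
(80375000, 465989, 3010354469703125000000)%ZZ;
(80500000, 463364, 3002714561000000000000)%ZZ;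
(80625000, 460767, 2995165487109375000000)%ZZ;
(80750000, 458197, 2987702175812500000000)%ZZ;
(80875000, 455655, 2980332560859375000000)%ZZ;
(81000000, 453140, 2973051540000000000000)%ZZ;
(81125000, 450651, 2965853935171875000000)%ZZ;
(81250000, 448189, 2958747695312500000000)%ZZ;
(81375000, 445753, 2951727611765625000000)%ZZ;
(81500000, 443342, 2944788399500000000000)%ZZ;
(81625000, 440957, 2937938022078125000000)%ZZ;
(81750000, 438596, 2931164480250000000000)%ZZ;
(81875000, 436259, 2924469023046875000000)%ZZ;
(82000000, 433947, 2917859628000000000000)%ZZ;
(82125000, 431659, 2911330870171875000000)%ZZ;
(82250000, 429394, 2904877247125000000000)%ZZ;
(82375000, 427152, 2898499964250000000000)%ZZ;
(82500000, 424933, 2892200231250000000000)%ZZ;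
(82625000, 422737, 2885979262140625000000)%ZZ;
(82750000, 420563, 2879831427687500000000)%ZZ;
(82875000, 418410, 2873751020156250000000)%ZZ;
(83000000, 416280, 2867752920000000000000)%ZZ;
(83125000, 414170, 2861817628906250000000)%ZZ;
(83250000, 412082, 2855960056125000000000)%ZZ;
(83375000, 410015, 2850174427109375000000)%ZZ;
(83500000, 407968, 2844454888000000000000)%ZZ;
(83625000, 405941, 2838802498453125000000)%ZZ;
(83750000, 403935, 2833225335937500000000)%ZZ;
(83875000, 401948, 2827710460437500000000)%ZZ;
(84000000, 399980, 2822258880000000000000)%ZZ;
(84125000, 398032, 2816878683250000000000)%ZZ;
(84250000, 396102, 2811556752375000000000)%ZZ;
(84375000, 394192, 2806308281250000000000)%ZZ;
(84500000, 392299, 2801112934750000000000)%ZZ;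
(84625000, 390426, 2795993096156250000000)%ZZ;
(84750000, 388570, 2790928310625000000000)%ZZ;
(84875000, 386731, 2785919483921875000000)%ZZ;
(85000000, 384911, 2780981975000000000000)%ZZ;
(85125000, 383108, 2776102331062500000000)%ZZ;
(85250000, 381321, 2771274200062500000000)%ZZ;
(85375000, 379552, 2766513014500000000000)%ZZ;
(85500000, 377800, 2761812450000000000000)%ZZ;
(85625000, 376063, 2757158768359375000000)%ZZ;
(85750000, 374344, 2752574828500000000000)%ZZ;
(85875000, 372640, 2748039502500000000000)%ZZ;
(86000000, 370952, 2743560992000000000000)%ZZ;
(86125000, 369280, 2739140170000000000000)%ZZ;
(86250000, 367623, 2734770473437500000000)%ZZ;
(86375000, 365982, 2730460177218750000000)%ZZ;
(86500000, 364356, 2726202681000000000000)%ZZ;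
(86625000, 362745, 2721998804765625000000)%ZZ;
(86750000, 361148, 2717841845750000000000)%ZZ;
(86875000, 359566, 2713740111718750000000)%ZZ;
(87000000, 357999, 2709694431000000000000)%ZZ;
(87125000, 356445, 2705690453203125000000)%ZZ;
(87250000, 354906, 2701744106625000000000)%ZZ;
(87375000, 353381, 2697848593453125000000)%ZZ;
(87500000, 351869, 2693997031250000000000)%ZZ;
(87625000, 350371, 2690197808921875000000)%ZZ;
(87750000, 348887, 2686451705437500000000)%ZZ;
(87875000, 347415, 2682744058359375000000)%ZZ;
(88000000, 345957, 2679091008000000000000)%ZZ;
(88125000, 344512, 2675485575000000000000)%ZZ;
(88250000, 343080, 2671928482500000000000)%ZZ;
(88375000, 341660, 2668412645937500000000)%ZZ;
(88500000, 340253, 2664946559250000000000)%ZZ;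
(88625000, 338858, 2661523098406250000000)%ZZ;
(88750000, 337475, 2658142929687500000000)%ZZ;
(88875000, 336104, 2654806721625000000000)%ZZ;
(89000000, 334746, 2651523066000000000000)%ZZ;
(89125000, 333399, 2648276816109375000000)%ZZ;
(89250000, 332064, 2645076546000000000000)%ZZ;
(89375000, 330740, 2641914945312500000000)%ZZ;
(89500000, 329428, 2638800637000000000000)%ZZ;
(89625000, 328128, 2635734303000000000000)%ZZ;
(89750000, 326838, 2632700517375000000000)%ZZ;
(89875000, 325559, 2629707909359375000000)%ZZ;
(90000000, 324292, 2626765200000000000000)%ZZ;
(90125000, 323035, 2623856834921875000000)%ZZ;
(90250000, 321789, 2620991516812500000000)%ZZ;
(90375000, 320553, 2618161705265625000000)%ZZ;
(90500000, 319328, 2615376152000000000000)%ZZ;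
(90625000, 318113, 2612627275390625000000)%ZZ;
(90750000, 316909, 2609923876312500000000)%ZZ;
(90875000, 315714, 2607250073531250000000)%ZZ;
(91000000, 314530, 2604622930000000000000)%ZZ;
(91125000, 313355, 2602026477421875000000)%ZZ;
(91250000, 312190, 2599469546875000000000)%ZZ;
(91375000, 311035, 2596952713046875000000)%ZZ;
(91500000, 309890, 2594476552500000000000)%ZZ;
(91625000, 308754, 2592033248531250000000)%ZZ;
(91750000, 307628, 2589631730750000000000)%ZZ;
(91875000, 306510, 2587255699218750000000)%ZZ;
(92000000, 305402, 2584922528000000000000)%ZZ;
(92125000, 304303, 2582624315734375000000)%ZZ;
(92250000, 303213, 2580361580812500000000)%ZZ;
(92375000, 302132, 2578134843312500000000)%ZZ;
(92500000, 301060, 2575944625000000000000)%ZZ;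
(92625000, 299996, 2573782869937500000000)%ZZ;
(92750000, 298942, 2571667238875000000000)%ZZ;
(92875000, 297895, 2569572450859375000000)%ZZ;
(93000000, 296857, 2567516193000000000000)%ZZ;
(93125000, 295828, 2565498995312500000000)%ZZ;
(93250000, 294807, 2563512693937500000000)%ZZ;
(93375000, 293794, 2561557752281250000000)%ZZ;
(93500000, 292789, 2559634635250000000000)%ZZ;
(93625000, 291792, 2557743809250000000000)%ZZ;
(93750000, 290803, 2555885742187500000000)%ZZ;
(93875000, 289822, 2554060903468750000000)%ZZ;
(94000000, 288849, 2552269764000000000000)%ZZ;
(94125000, 287883, 2550503936671875000000)%ZZ;
(94250000, 286925, 2548772707812500000000)%ZZ;
(94375000, 285975, 2547076552734375000000)%ZZ;
(94500000, 285032, 2545407018000000000000)%ZZ;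
(94625000, 284097, 2543773464890625000000)%ZZ;
(94750000, 283168, 2542158418000000000000)%ZZ;
(94875000, 282248, 2540589220125000000000)%ZZ;
(95000000, 281334, 2539039350000000000000)%ZZ;
(95125000, 280428, 2537527246687500000000)%ZZ;
(95250000, 279528, 2536035250500000000000)%ZZ;
(95375000, 278636, 2534581898187500000000)%ZZ;
(95500000, 277750, 2533149437500000000000)%ZZ;
(95625000, 276872, 2531756503125000000000)%ZZ;
(95750000, 276000, 2530385250000000000000)%ZZ;
(95875000, 275135, 2529045218984375000000)%ZZ;
(96000000, 274276, 2527727616000000000000)%ZZ;
(96125000, 273424, 2526442032250000000000)%ZZ;
(96250000, 272579, 2525188892187500000000)%ZZ;
(96375000, 271740, 2523959333437500000000)%ZZ;
(96500000, 270908, 2522763023000000000000)%ZZ;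
(96625000, 270082, 2521591052781250000000)%ZZ;
(96750000, 269262, 2520443779875000000000)%ZZ;
(96875000, 268448, 2519321562500000000000)%ZZ;
(97000000, 267641, 2518234169000000000000)%ZZ;
(97125000, 266840, 2517172599375000000000)%ZZ;
(97250000, 266045, 2516137215312500000000)%ZZ;
(97375000, 265255, 2515118897734375000000)%ZZ;
(97500000, 264472, 2514136950000000000000)%ZZ;
(97625000, 263695, 2513182279609375000000)%ZZ;
(97750000, 262923, 2512245697687500000000)%ZZ;
(97875000, 262158, 2511346657218750000000)%ZZ;
(98000000, 261398, 2510466392000000000000)%ZZ;
(98125000, 260643, 2509605198046875000000)%ZZ;
(98250000, 259895, 2508782678437500000000)%ZZ;
(98375000, 259152, 2507979923250000000000)%ZZ;
(98500000, 258414, 2507197231500000000000)%ZZ;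
(98625000, 257682, 2506444630031250000000)%ZZ;
(98750000, 256955, 2505712742187500000000)%ZZ;
(98875000, 256234, 2505011646156250000000)%ZZ;
(99000000, 255518, 2504331918000000000000)%ZZ;
(99125000, 254807, 2503673861609375000000)%ZZ;
(99250000, 254102, 2503047632375000000000)%ZZ;
(99375000, 253402, 2502443735156250000000)%ZZ;
(99500000, 252707, 2501862476750000000000)%ZZ;
(99625000, 252017, 2501304164890625000000)%ZZ;
(99750000, 251332, 2500769108250000000000)%ZZ;
(99875000, 250652, 2500257616437500000000)%ZZ;
(100000000, 249977, 2499770000000000000000)%ZZ;
(100125000, 249307, 2499306570421875000000)%ZZ;
(100250000, 248642, 2498867640125000000000)%ZZ;
(100375000, 247981, 2498443447328125000000)%ZZ;
(100500000, 247326, 2498054431500000000000)%ZZ;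
(100625000, 246675, 2497680732421875000000)%ZZ;
(100750000, 246029, 2497332741312500000000)%ZZ;
(100875000, 245387, 2497000599421875000000)%ZZ;
(101000000, 244751, 2496704951000000000000)%ZZ;
(101125000, 244118, 2496415511843750000000)%ZZ;
(101250000, 243491, 2496163204687500000000)%ZZ;
(101375000, 242868, 2495927872312500000000)%ZZ;
(101500000, 242249, 2495709760250000000000)%ZZ;
(101625000, 241635, 2495519442421875000000)%ZZ;
(101750000, 241025, 2495346889062500000000)%ZZ;
(101875000, 240420, 2495202726562500000000)%ZZ;
(102000000, 239819, 2495076876000000000000)%ZZ;
(102125000, 239222, 2494969586843750000000)%ZZ;
(102250000, 238629, 2494881109312500000000)%ZZ;
(102375000, 238041, 2494822175015625000000)%ZZ;
(102500000, 237457, 2494782606250000000000)%ZZ;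
(102625000, 236877, 2494762655578125000000)%ZZ;
(102750000, 236301, 2494762576312500000000)%ZZ;
(102875000, 235729, 2494782622515625000000)%ZZ;
(103000000, 235161, 2494823049000000000000)%ZZ;
(103125000, 234597, 2494884111328125000000)%ZZ;
(103250000, 234037, 2494966065812500000000)%ZZ;
(103375000, 233482, 2495079855906250000000)%ZZ;
(103500000, 232930, 2495204392500000000000)%ZZ;
(103625000, 232382, 2495350594718750000000)%ZZ;
(103750000, 231837, 2495507957812500000000)%ZZ;
(103875000, 231297, 2495698244015625000000)%ZZ;
(104000000, 230761, 2495910976000000000000)%ZZ;
(104125000, 230228, 2496135573312500000000)%ZZ;
(104250000, 229699, 2496383088187500000000)%ZZ;
(104375000, 229173, 2496642889453125000000)%ZZ;
(104500000, 228651, 2496926082750000000000)%ZZ;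
(104625000, 228133, 2497232932453125000000)%ZZ;
(104750000, 227619, 2497563703687500000000)%ZZ;
(104875000, 227108, 2497907663562500000000)%ZZ;
(105000000, 226601, 2498276025000000000000)%ZZ;
(105125000, 226097, 2498658004015625000000)%ZZ;
(105250000, 225597, 2499064867312500000000)%ZZ;
(105375000, 225100, 2499485779687500000000)%ZZ;
(105500000, 224606, 2499920931500000000000)%ZZ;
(105625000, 224116, 2500381670312500000000)%ZZ;
(105750000, 223630, 2500868266875000000000)%ZZ;
(105875000, 223147, 2501369783171875000000)%ZZ;
(106000000, 222667, 2501886412000000000000)%ZZ;
(106125000, 222190, 2502418346718750000000)%ZZ;
(106250000, 221717, 2502977070312500000000)%ZZ;
(106375000, 221247, 2503551541359375000000)%ZZ;
(106500000, 220780, 2504141955000000000000)%ZZ;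
(106625000, 220316, 2504748506937500000000)%ZZ;
(106750000, 219856, 2505382789000000000000)%ZZ;
(106875000, 219399, 2506033655859375000000)%ZZ;
(107000000, 218945, 2506701305000000000000)%ZZ;
(107125000, 218494, 2507385934468750000000)%ZZ;
(107250000, 218046, 2508087742875000000000)%ZZ;
(107375000, 217601, 2508806929390625000000)%ZZ;
(107500000, 217159, 2509543693750000000000)%ZZ;
(107625000, 216720, 2510298236250000000000)%ZZ;
(107750000, 216285, 2511082367812500000000)%ZZ;
(107875000, 215852, 2511873096687500000000)%ZZ;
(108000000, 215422, 2512682208000000000000)%ZZ;
(108125000, 214995, 2513509904296875000000)%ZZ;
(108250000, 214571, 2514356388687500000000)%ZZ;
(108375000, 214150, 2515221864843750000000)%ZZ;
(108500000, 213732, 2516106537000000000000)%ZZ;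
(108625000, 213316, 2516998810562500000000)%ZZ;
(108750000, 212904, 2517922462500000000000)%ZZ;
(108875000, 212494, 2518854072718750000000)%ZZ;
(109000000, 212087, 2519805647000000000000)%ZZ;
(109125000, 211683, 2520777392296875000000)%ZZ;
(109250000, 211281, 2521757580562500000000)%ZZ;
(109375000, 210883, 2522770263671875000000)%ZZ;
(109500000, 210487, 2523791751750000000000)%ZZ;
(109625000, 210093, 2524822171828125000000)%ZZ;
(109750000, 209703, 2525885741437500000000)%ZZ;
(109875000, 209315, 2526958608046875000000)%ZZ;
(110000000, 208929, 2528040900000000000000)%ZZ;
(110125000, 208546, 2529144873531250000000)%ZZ;
(110250000, 208166, 2530270740375000000000)%ZZ;
(110375000, 207788, 2531406530187500000000)%ZZ;
(110500000, 207413, 2532564583250000000000)%ZZ;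
(110625000, 207041, 2533745112890625000000)%ZZ;
(110750000, 206671, 2534936067437500000000)%ZZ;
(110875000, 206303, 2536137578234375000000)%ZZ;
(111000000, 205938, 2537362098000000000000)%ZZ;
(111125000, 205575, 2538597493359375000000)%ZZ;
(111250000, 205215, 2539856273437500000000)%ZZ;
(111375000, 204857, 2541126250265625000000)%ZZ;
(111500000, 204502, 2542419989500000000000)%ZZ;
(111625000, 204149, 2543725248453125000000)%ZZ;
(111750000, 203799, 2545054649437500000000)%ZZ;
(111875000, 203450, 2546383378906250000000)%ZZ;
(112000000, 203105, 2547749120000000000000)%ZZ;
(112125000, 202761, 2549114460140625000000)%ZZ;
(112250000, 202420, 2550504651250000000000)%ZZ;
(112375000, 202081, 2551907285640625000000)%ZZ;
(112500000, 201744, 2553322500000000000000)%ZZ;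
(112625000, 201410, 2554763115781250000000)%ZZ;
(112750000, 201078, 2556216642375000000000)%ZZ;
(112875000, 200748, 2557683217687500000000)%ZZ;
(113000000, 200420, 2559162980000000000000)%ZZ;
(113125000, 200095, 2560668865234375000000)%ZZ;
(113250000, 199772, 2562188271750000000000)%ZZ;
(113375000, 199451, 2563721339046875000000)%ZZ;
(113500000, 199132, 2565268207000000000000)%ZZ;
(113625000, 198815, 2566829015859375000000)%ZZ;
(113750000, 198500, 2568403906250000000000)%ZZ;
(113875000, 198188, 2570005986687500000000)%ZZ;
(114000000, 197877, 2571609492000000000000)%ZZ;
(114125000, 197569, 2573240527515625000000)%ZZ;
(114250000, 197263, 2574886267937500000000)%ZZ;
(114375000, 196958, 2576533774218750000000)%ZZ;
(114500000, 196656, 2578209324000000000000)%ZZ;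
(114625000, 196356, 2579900007562500000000)%ZZ;
(114750000, 196058, 2581605968625000000000)%ZZ;
(114875000, 195762, 2583327351281250000000)%ZZ;
(115000000, 195468, 2585064300000000000000)%ZZ;
(115125000, 195176, 2586816959625000000000)%ZZ;
(115250000, 194886, 2588585475375000000000)%ZZ;
(115375000, 194597, 2590356681453125000000)%ZZ;
(115500000, 194311, 2592157317750000000000)%ZZ;
(115625000, 194027, 2593974248046875000000)%ZZ;
(115750000, 193745, 2595807619062500000000)%ZZ;
(115875000, 193464, 2597644150875000000000)%ZZ;
(116000000, 193185, 2599497360000000000000)%ZZ;
(116125000, 192909, 2601380879203125000000)%ZZ;
(116250000, 192634, 2603267915625000000000)%ZZ;
(116375000, 192361, 2605172073765625000000)%ZZ;
(116500000, 192090, 2607093502500000000000)%ZZ;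
(116625000, 191820, 2609018749687500000000)%ZZ;
(116750000, 191553, 2610975138562500000000)%ZZ;
(116875000, 191287, 2612935587109375000000)%ZZ;
(117000000, 191023, 2614913847000000000000)%ZZ;
(117125000, 190761, 2616910068890625000000)%ZZ;
(117250000, 190501, 2618924403812500000000)%ZZ;
(117375000, 190242, 2620943226281250000000)%ZZ;
(117500000, 189986, 2622994212500000000000)%ZZ;
(117625000, 189731, 2625049931421875000000)%ZZ;
(117750000, 189477, 2627110447312500000000)%ZZ;
(117875000, 189226, 2629203613656250000000)%ZZ;
(118000000, 188976, 2631301824000000000000)%ZZ;
(118125000, 188728, 2633419096875000000000)%ZZ;
(118250000, 188481, 2635541603062500000000)%ZZ;
(118375000, 188236, 2637683420687500000000)%ZZ;
(118500000, 187993, 2639844704250000000000)%ZZ;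
(118625000, 187752, 2642025608625000000000)%ZZ;
(118750000, 187512, 2644212187500000000000)%ZZ;
(118875000, 187274, 2646418638656250000000)%ZZ;
(119000000, 187037, 2648630957000000000000)%ZZ;
(119125000, 186802, 2650863400281250000000)%ZZ;
(119250000, 186569, 2653116125062500000000)%ZZ;
(119375000, 186337, 2655375037890625000000)%ZZ;
(119500000, 186107, 2657654486750000000000)%ZZ;
(119625000, 185879, 2659954629234375000000)%ZZ;
(119750000, 185652, 2662261283250000000000)%ZZ;
(119875000, 185426, 2664574517281250000000)%ZZ;
(120000000, 185202, 2666908800000000000000)%ZZ;
(120125000, 184980, 2669264290312500000000)%ZZ;
(120250000, 184759, 2671626687437500000000)%ZZ;
(120375000, 184540, 2674010550937500000000)%ZZ;
(120500000, 184322, 2676401520500000000000)%ZZ;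
(120625000, 184106, 2678814216406250000000)%ZZ;
(120750000, 183891, 2681234218687500000000)%ZZ;
(120875000, 183678, 2683676208468750000000)%ZZ;
(121000000, 183466, 2686125706000000000000)%ZZ;
(121125000, 183256, 2688597453375000000000)%ZZ;
(121250000, 183047, 2691076910937500000000)%ZZ;
(121375000, 182840, 2693578881875000000000)%ZZ;
(121500000, 182634, 2696088766500000000000)%ZZ;
(121625000, 182429, 2698606636578125000000)%ZZ;
(121750000, 182226, 2701147387125000000000)%ZZ;
(121875000, 182024, 2703696328125000000000)%ZZ;
(122000000, 181824, 2706268416000000000000)%ZZ;
(122125000, 181625, 2708848900390625000000)%ZZ;
(122250000, 181428, 2711452799250000000000)%ZZ;
(122375000, 181232, 2714065301750000000000)%ZZ;
(122500000, 181037, 2716686481250000000000)%ZZ;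
(122625000, 180844, 2719331448187500000000)%ZZ;
(122750000, 180652, 2721985300750000000000)%ZZ;
(122875000, 180461, 2724648112953125000000)%ZZ;
(123000000, 180272, 2727335088000000000000)%ZZ;
(123125000, 180084, 2730031232812500000000)%ZZ;
(123250000, 179898, 2732751812625000000000)%ZZ;
(123375000, 179713, 2735481773390625000000)%ZZ;
(123500000, 179529, 2738221190250000000000)%ZZ;
(123625000, 179346, 2740970138531250000000)%ZZ;
(123750000, 179165, 2743744007812500000000)%ZZ;
(123875000, 178985, 2746527621640625000000)%ZZ;
(124000000, 178806, 2749321056000000000000)%ZZ;
(124125000, 178629, 2752139794078125000000)%ZZ;
(124250000, 178453, 2754968567312500000000)%ZZ;
(124375000, 178278, 2757807452343750000000)%ZZ;
(124500000, 178104, 2760656526000000000000)%ZZ;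
(124625000, 177932, 2763531396687500000000)%ZZ;
(124750000, 177761, 2766416672562500000000)%ZZ;
(124875000, 177591, 2769312431109375000000)%ZZ;
(125000000, 177422, 2772218750000000000000)%ZZ;
(125125000, 177255, 2775151363359375000000)%ZZ;
(125250000, 177089, 2778094755562500000000)%ZZ;
(125375000, 176924, 2781049004937500000000)%ZZ;
(125500000, 176760, 2784014190000000000000)%ZZ;
(125625000, 176598, 2787006171093750000000)%ZZ;
(125750000, 176436, 2789993495250000000000)%ZZ;
(125875000, 176276, 2793007836312500000000)%ZZ;
(126000000, 176117, 2796033492000000000000)%ZZ;
(126125000, 175959, 2799070541859375000000)%ZZ;
(126250000, 175803, 2802135004687500000000)%ZZ;
(126375000, 175647, 2805195113859375000000)%ZZ;
(126500000, 175493, 2808282859250000000000)%ZZ;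
(126625000, 175340, 2811382382187500000000)%ZZ;
(126750000, 175188, 2814493763250000000000)%ZZ;
(126875000, 175037, 2817617083203125000000)%ZZ;
(127000000, 174887, 2820752423000000000000)%ZZ;
(127125000, 174739, 2823916024546875000000)%ZZ;
(127250000, 174591, 2827075679437500000000)%ZZ;
(127375000, 174445, 2830263822578125000000)%ZZ;
(127500000, 174300, 2833464375000000000000)%ZZ;
(127625000, 174156, 2836677418687500000000)%ZZ;
(127750000, 174013, 2839903035812500000000)%ZZ;
(127875000, 173871, 2843141308734375000000)%ZZ;
(128000000, 173730, 2846392320000000000000)%ZZ;
(128125000, 173590, 2849656152343750000000)%ZZ;
(128250000, 173452, 2852949336750000000000)%ZZ;
(128375000, 173314, 2856239092281250000000)%ZZ;
(128500000, 173177, 2859541918250000000000)%ZZ;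
(128625000, 173042, 2862874442531250000000)%ZZ;
(128750000, 172907, 2866203692187500000000)%ZZ;
(128875000, 172774, 2869562872093750000000)%ZZ;
(129000000, 172642, 2872935522000000000000)%ZZ;
(129125000, 172510, 2876305052968750000000)%ZZ;
(129250000, 172380, 2879704863750000000000)%ZZ;
(129375000, 172251, 2883118398046875000000)%ZZ;
(129500000, 172123, 2886545740750000000000)%ZZ;
(129625000, 171996, 2889986976937500000000)%ZZ;
(129750000, 171869, 2893425356812500000000)%ZZ;
(129875000, 171744, 2896894603500000000000)%ZZ;
(130000000, 171620, 2900378000000000000000)%ZZ;
(130125000, 171497, 2903875632140625000000)%ZZ;
(130250000, 171375, 2907387585937500000000)%ZZ;
(130375000, 171253, 2910896949953125000000)%ZZ;
(130500000, 171133, 2914437773250000000000)%ZZ;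
(130625000, 171014, 2917993177343750000000)%ZZ;
(130750000, 170896, 2921563249000000000000)%ZZ;
(130875000, 170779, 2925148075171875000000)%ZZ;
(131000000, 170662, 2928730582000000000000)%ZZ;
(131125000, 170547, 2932345146046875000000)%ZZ;
(131250000, 170432, 2935957500000000000000)%ZZ;
(131375000, 170319, 2939602151859375000000)%ZZ;
(131500000, 170207, 2943261995750000000000)%ZZ;
(131625000, 170095, 2946919794609375000000)%ZZ;
(131750000, 169984, 2950592896000000000000)%ZZ;
(131875000, 169875, 2954298779296875000000)%ZZ;
(132000000, 169766, 2958002784000000000000)%ZZ;
(132125000, 169658, 2961722356906250000000)%ZZ;
(132250000, 169551, 2965457586937500000000)%ZZ;
(132375000, 169445, 2969208563203125000000)%ZZ;
(132500000, 169340, 2972975375000000000000)%ZZ;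
(132625000, 169236, 2976758111812500000000)%ZZ;
(132750000, 169133, 2980556863312500000000)%ZZ;
(132875000, 169030, 2984354063593750000000)%ZZ;
(133000000, 168929, 2988185081000000000000)%ZZ;
(133125000, 168828, 2992014660937500000000)%ZZ;
(133250000, 168729, 2995878305062500000000)%ZZ;
(133375000, 168630, 2999740626093750000000)%ZZ;
(133500000, 168532, 3003619437000000000000)%ZZ;
(133625000, 168435, 3007514828671875000000)%ZZ;
(133750000, 168338, 3011409003125000000000)%ZZ;
(133875000, 168243, 3015337796296875000000)%ZZ;
(134000000, 168149, 3019283444000000000000)%ZZ;
(134125000, 168055, 3023228048359375000000)%ZZ;
(134250000, 167962, 3027189623625000000000)%ZZ;
(134375000, 167870, 3031168261718750000000)%ZZ;
(134500000, 167779, 3035164054750000000000)%ZZ;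
(134625000, 167689, 3039177095015625000000)%ZZ;
(134750000, 167600, 3043207475000000000000)%ZZ;
(134875000, 167511, 3047237096109375000000)%ZZ;
(135000000, 167423, 3051284175000000000000)%ZZ;
(135125000, 167337, 3055367063390625000000)%ZZ;
(135250000, 167250, 3059431078125000000000)%ZZ;
(135375000, 167165, 3063531088828125000000)%ZZ;
(135500000, 167081, 3067648930250000000000)%ZZ;
(135625000, 166997, 3071766301953125000000)%ZZ;
(135750000, 166914, 3075901624125000000000)%ZZ;
(135875000, 166832, 3080054990750000000000)%ZZ;
(136000000, 166751, 3084226496000000000000)%ZZ;
(136125000, 166671, 3088416234234375000000)%ZZ;
(136250000, 166591, 3092605735937500000000)%ZZ;
(136375000, 166512, 3096813591750000000000)%ZZ;
(136500000, 166434, 3101039896500000000000)%ZZ;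
(136625000, 166357, 3105284745203125000000)%ZZ;
(136750000, 166281, 3109548233062500000000)%ZZ;
(136875000, 166205, 3113811720703125000000)%ZZ;
(137000000, 166130, 3118093970000000000000)%ZZ;
(137125000, 166056, 3122395076625000000000)%ZZ;
(137250000, 165982, 3126696298875000000000)%ZZ;
(137375000, 165910, 3131035373593750000000)%ZZ;
(137500000, 165838, 3135374687500000000000)%ZZ;
(137625000, 165767, 3139733174484375000000)%ZZ;
(137750000, 165697, 3144110931062500000000)%ZZ;
(137875000, 165627, 3148489044421875000000)%ZZ;
(138000000, 165558, 3152886552000000000000)%ZZ;
(138125000, 165490, 3157303550781250000000)%ZZ;
(138250000, 165423, 3161740137937500000000)%ZZ;
(138375000, 165356, 3166177263187500000000)%ZZ;
(138500000, 165290, 3170634102500000000000)%ZZ;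
(138625000, 165225, 3175110753515625000000)%ZZ;
(138750000, 165161, 3179607314062500000000)%ZZ;
(138875000, 165097, 3184104595890625000000)%ZZ;
(139000000, 165034, 3188621914000000000000)%ZZ;
(139125000, 164972, 3193159366687500000000)%ZZ;
(139250000, 164910, 3197697661875000000000)%ZZ;
(139375000, 164849, 3202256219140625000000)%ZZ;
(139500000, 164789, 3206835137250000000000)%ZZ;
(139625000, 164730, 3211434515156250000000)%ZZ;
(139750000, 164671, 3216034921937500000000)%ZZ;
(139875000, 164613, 3220655917078125000000)%ZZ;
(140000000, 164556, 3225297600000000000000)%ZZ;
(140125000, 164500, 3229960070312500000000)%ZZ;
(140250000, 164444, 3234623757750000000000)%ZZ;
(140375000, 164388, 3239288657062500000000)%ZZ;
(140500000, 164334, 3243994243500000000000)%ZZ;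
(140625000, 164280, 3248701171875000000000)%ZZ;
(140750000, 164227, 3253429247687500000000)%ZZ;
(140875000, 164175, 3258178571484375000000)%ZZ;
(141000000, 164123, 3262929363000000000000)%ZZ;
(141125000, 164072, 3267701533625000000000)%ZZ;
(141250000, 164021, 3272475232812500000000)%ZZ;
(141375000, 163972, 3277290429562500000000)%ZZ;
(141500000, 163923, 3282107286750000000000)%ZZ;
(141625000, 163874, 3286925799781250000000)%ZZ;
(141750000, 163826, 3291766057125000000000)%ZZ;
(141875000, 163779, 3296628160546875000000)%ZZ;
(142000000, 163733, 3301512212000000000000)%ZZ;
(142125000, 163687, 3306398114109375000000)%ZZ;
(142250000, 163642, 3311306097625000000000)%ZZ;
(142375000, 163597, 3316215994328125000000)%ZZ;
(142500000, 163554, 3321168412500000000000)%ZZ;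
(142625000, 163510, 3326102536093750000000)%ZZ;
(142750000, 163468, 3331079386750000000000)%ZZ;
(142875000, 163426, 3336058348031250000000)%ZZ;
(143000000, 163385, 3341059865000000000000)%ZZ;
(143125000, 163344, 3346063556250000000000)%ZZ;
(143250000, 163304, 3351089938500000000000)%ZZ;
(143375000, 163265, 3356139115390625000000)%ZZ;
(143500000, 163226, 3361190598500000000000)%ZZ;
(143625000, 163188, 3366265012312500000000)%ZZ;
(143750000, 163151, 3371362460937500000000)%ZZ;
(143875000, 163114, 3376462348656250000000)%ZZ;
(144000000, 163077, 3381564672000000000000)%ZZ;
(144125000, 163042, 3386710971531250000000)%ZZ;
(144250000, 163007, 3391859843937500000000)%ZZ;
(144375000, 162972, 3397011285937500000000)%ZZ;
(144500000, 162939, 3402207054750000000000)%ZZ;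
(144625000, 162905, 3407384614765625000000)%ZZ;
(144750000, 162873, 3412606712062500000000)%ZZ;
(144875000, 162841, 3417831583140625000000)%ZZ;
(145000000, 162810, 3423080250000000000000)%ZZ;
(145125000, 162779, 3428331757171875000000)%ZZ;
(145250000, 162749, 3433607199312500000000)%ZZ;
(145375000, 162719, 3438885548609375000000)%ZZ;
(145500000, 162690, 3444187972500000000000)%ZZ;
(145625000, 162662, 3449514577343750000000)%ZZ;
(145750000, 162634, 3454844226625000000000)%ZZ;
(145875000, 162607, 3460198197234375000000)%ZZ;
(146000000, 162580, 3465555280000000000000)%ZZ;
(146125000, 162554, 3470936824906250000000)%ZZ;
(146250000, 162528, 3476321550000000000000)%ZZ;
(146375000, 162504, 3481752304125000000000)%ZZ;
(146500000, 162479, 3487164917750000000000)%ZZ;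
(146625000, 162455, 3492602276484375000000)%ZZ;
(146750000, 162432, 3498064488000000000000)%ZZ;
(146875000, 162410, 3503551660156250000000)%ZZ;
(147000000, 162388, 3509042292000000000000)%ZZ;
(147125000, 162366, 3514536381468750000000)%ZZ;
(147250000, 162345, 3520055609062500000000)%ZZ;
(147375000, 162325, 3525600083203125000000)%ZZ;
(147500000, 162305, 3531148156250000000000)%ZZ;
(147625000, 162286, 3536721619468750000000)%ZZ;
(147750000, 162267, 3542298751687500000000)%ZZ;
(147875000, 162249, 3547901418140625000000)%ZZ;
(148000000, 162232, 3553529728000000000000)%ZZ;
(148125000, 162215, 3559161849609375000000)%ZZ;
(148250000, 162198, 3564797781375000000000)%ZZ;
(148375000, 162182, 3570459536843750000000)%ZZ;
(148500000, 162167, 3576147225750000000000)%ZZ;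
(148625000, 162152, 3581838868625000000000)%ZZ;
(148750000, 162138, 3587556590625000000000)%ZZ;
(148875000, 162124, 3593278338187500000000)%ZZ;
(149000000, 162111, 3599026311000000000000)%ZZ;
(149125000, 162098, 3604778381281250000000)%ZZ;
(149250000, 162086, 3610556823375000000000)%ZZ;
(149375000, 162074, 3616339435156250000000)%ZZ;
(149500000, 162063, 3622148565750000000000)%ZZ;
(149625000, 162053, 3627984326203125000000)%ZZ;
(149750000, 162043, 3633824402687500000000)%ZZ;
(149875000, 162033, 3639668794265625000000)%ZZ;
(150000000, 162024, 3645540000000000000000)%ZZ;
(150125000, 162016, 3651438131500000000000)%ZZ;
(150250000, 162008, 3657340725500000000000)%ZZ;
(150375000, 162001, 3663270393890625000000)%ZZ;
(150500000, 161994, 3669204598500000000000)%ZZ;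
(150625000, 161987, 3675143338671875000000)%ZZ;
(150750000, 161982, 3681132064875000000000)%ZZ;
(150875000, 161976, 3687102712875000000000)%ZZ;
(151000000, 161971, 3693100771000000000000)%ZZ;
(151125000, 161967, 3699126351984375000000)%ZZ;
(151250000, 161963, 3705156692187500000000)%ZZ;
(151375000, 161960, 3711214705625000000000)%ZZ;
(151500000, 161957, 3717277553250000000000)%ZZ;
(151625000, 161955, 3723368224921875000000)%ZZ;
(151750000, 161953, 3729463806062500000000)%ZZ;
(151875000, 161952, 3735587362500000000000)%ZZ;
(152000000, 161951, 3741715904000000000000)%ZZ;
(152125000, 161951, 3747872572484375000000)%ZZ;
(152250000, 161951, 3754034301937500000000)%ZZ;
(152375000, 161952, 3760224310500000000000)%ZZ;
(152500000, 161953, 3766419456250000000000)%ZZ;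
(152625000, 161955, 3772643033671875000000)%ZZ;
(152750000, 161957, 3778871824812500000000)%ZZ;
(152875000, 161959, 3785105829859375000000)%ZZ;
(153000000, 161962, 3791368458000000000000)%ZZ;
(153125000, 161966, 3797659824218750000000)%ZZ;
(153250000, 161970, 3803956558125000000000)%ZZ;
(153375000, 161975, 3810282183984375000000)%ZZ;
(153500000, 161980, 3816613255000000000000)%ZZ;
(153625000, 161985, 3822949771640625000000)%ZZ;
(153750000, 161992, 3829339012500000000000)%ZZ;
(153875000, 161998, 3835710176218750000000)%ZZ;
(154000000, 162005, 3842110580000000000000)%ZZ;
(154125000, 162013, 3848540339953125000000)%ZZ;
(154250000, 162020, 3854951986250000000000)%ZZ;
(154375000, 162029, 3861416898828125000000)%ZZ;
(154500000, 162038, 3867887569500000000000)%ZZ;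
(154625000, 162047, 3874363999109375000000)%ZZ;
(154750000, 162057, 3880870136062500000000)%ZZ;
(154875000, 162067, 3887382111046875000000)%ZZ;
(155000000, 162078, 3893923950000000000000)%ZZ;
(155125000, 162089, 3900471706390625000000)%ZZ;
(155250000, 162101, 3907049483812500000000)%ZZ;
(155375000, 162113, 3913633258390625000000)%ZZ;
(155500000, 162126, 3920247211500000000000)%ZZ;
(155625000, 162139, 3926867241796875000000)%ZZ;
(155750000, 162152, 3933493350500000000000)%ZZ;
(155875000, 162166, 3940149835843750000000)%ZZ;
(156000000, 162181, 3946836816000000000000)%ZZ;
(156125000, 162195, 3953505659296875000000)%ZZ;
(156250000, 162211, 3960229492187500000000)%ZZ;
(156375000, 162226, 3966935191031250000000)%ZZ;
(156500000, 162243, 3973696116750000000000)%ZZ;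
(156625000, 162259, 3980438911421875000000)%ZZ;
(156750000, 162277, 3987237170812500000000)%ZZ;
(156875000, 162294, 3994017302343750000000)%ZZ;
(157000000, 162312, 4000828488000000000000)%ZZ;
(157125000, 162331, 4007670847171875000000)%ZZ;
(157250000, 162349, 4014495044312500000000)%ZZ;
(157375000, 162369, 4021375263890625000000)%ZZ;
(157500000, 162389, 4028262131250000000000)%ZZ;
(157625000, 162409, 4035155648265625000000)%ZZ;
(157750000, 162429, 4042055816812500000000)%ZZ;
(157875000, 162451, 4049012487796875000000)%ZZ;
(158000000, 162472, 4055951008000000000000)%ZZ;
(158125000, 162494, 4062921267968750000000)%ZZ;
(158250000, 162516, 4069898345250000000000)%ZZ;
(158375000, 162539, 4076907324546875000000)%ZZ;
(158500000, 162563, 4083948326750000000000)%ZZ;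
(158625000, 162586, 4090971149156250000000)%ZZ;
(158750000, 162610, 4098026078125000000000)%ZZ;
(158875000, 162635, 4105113234921875000000)%ZZ;
(159000000, 162660, 4112207460000000000000)%ZZ;
(159125000, 162685, 4119308755703125000000)%ZZ;
(159250000, 162711, 4126442484937500000000)%ZZ;
(159375000, 162737, 4133583369140625000000)%ZZ;
(159500000, 162764, 4140756851000000000000)%ZZ;
(159625000, 162791, 4147937572484375000000)%ZZ;
(159750000, 162819, 4155151056187500000000)%ZZ;
(159875000, 162847, 4162371864484375000000)%ZZ;
(160000000, 162875, 4169600000000000000000)%ZZ;
(160125000, 162904, 4176861105375000000000)%ZZ;
(160250000, 162933, 4184129623312500000000)%ZZ;
(160375000, 162963, 4191431276671875000000)%ZZ;
(160500000, 162993, 4198740428250000000000)%ZZ;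
(160625000, 163023, 4206057080859375000000)%ZZ;
(160750000, 163054, 4213407077875000000000)%ZZ;
(160875000, 163085, 4220764661953125000000)%ZZ;
(161000000, 163117, 4228155757000000000000)%ZZ;
(161125000, 163149, 4235554525453125000000)%ZZ;
(161250000, 163181, 4242960970312500000000)%ZZ;
(161375000, 163214, 4250401136468750000000)%ZZ;
(161500000, 163248, 4257875148000000000000)%ZZ;
(161625000, 163281, 4265330883890625000000)%ZZ;
(161750000, 163315, 4272820552187500000000)%ZZ;
(161875000, 163350, 4280344277343750000000)%ZZ;
(162000000, 163385, 4287875940000000000000)%ZZ;
(162125000, 163420, 4295415543437500000000)%ZZ;
(162250000, 163456, 4302989416000000000000)%ZZ;
(162375000, 163492, 4310571317062500000000)%ZZ;
(162500000, 163528, 4318161250000000000000)%ZZ;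
(162625000, 163565, 4325785665078125000000)%ZZ;
(162750000, 163603, 4333444687687500000000)%ZZ;
(162875000, 162562, 4312487916531250000000)%ZZ;
(163000000, 161471, 4290122999000000000000)%ZZ;
(163125000, 160394, 4268046747656250000000)%ZZ;
(163250000, 159331, 4246260773687500000000)%ZZ;
(163375000, 158281, 4224739999515625000000)%ZZ;
(163500000, 157243, 4203459186750000000000)%ZZ;
(163625000, 156218, 4182446482156250000000)%ZZ;
(163750000, 155206, 4161703384375000000000)%ZZ;
(163875000, 154205, 4141177684453125000000)%ZZ;
(164000000, 153216, 4120897536000000000000)%ZZ;
(164125000, 152239, 4100864321734375000000)%ZZ;
(164250000, 151273, 4081052448562500000000)%ZZ;
(164375000, 150317, 4061436161328125000000)%ZZ;
(164500000, 149373, 4042070723250000000000)%ZZ;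
(164625000, 148439, 4022903322984375000000)%ZZ;
(164750000, 147515, 4003935107187500000000)%ZZ;
(164875000, 146601, 3985167224390625000000)%ZZ;
(165000000, 145697, 3966600825000000000000)%ZZ;
(165125000, 144802, 3948209795031250000000)%ZZ;
(165250000, 143917, 3930022472312500000000)%ZZ;
(165375000, 143041, 3912012663890625000000)%ZZ;
(165500000, 142174, 3894181403500000000000)%ZZ;
(165625000, 141316, 3876529726562500000000)%ZZ;
(165750000, 140467, 3859058670187500000000)%ZZ;
(165875000, 139626, 3841741758656250000000)%ZZ;
(166000000, 138793, 3824579908000000000000)%ZZ;
(166125000, 137969, 3807601633265625000000)%ZZ;
(166250000, 137152, 3790752700000000000000)%ZZ;
(166375000, 136344, 3774089265375000000000)%ZZ;
(166500000, 135543, 3757556931750000000000)%ZZ;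
(166625000, 134749, 3741156497828125000000)%ZZ;
(166750000, 133963, 3724916569187500000000)%ZZ;
(166875000, 133184, 3708810225000000000000)%ZZ;
(167000000, 132413, 3692866157000000000000)%ZZ;
(167125000, 131648, 3677029433000000000000)%ZZ;
(167250000, 130890, 3661328705625000000000)%ZZ;
(167375000, 130139, 3645764781546875000000)%ZZ;
(167500000, 129395, 3630338468750000000000)%ZZ;
(167625000, 128656, 3614994380250000000000)%ZZ;
(167750000, 127925, 3599817495312500000000)%ZZ;
(167875000, 127199, 3584724205484375000000)%ZZ;
(168000000, 126480, 3569771520000000000000)%ZZ;
(168125000, 125767, 3554931987109375000000)%ZZ;
(168250000, 125060, 3540206296250000000000)%ZZ;
(168375000, 124358, 3525566787843750000000)%ZZ;
(168500000, 123663, 3511070811750000000000)%ZZ;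
(168625000, 122972, 3496633883937500000000)%ZZ;
(168750000, 122288, 3482341875000000000000)%ZZ;
(168875000, 121609, 3468138568890625000000)%ZZ;
(169000000, 120935, 3454024535000000000000)%ZZ;
(169125000, 120267, 3440028946921875000000)%ZZ;
(169250000, 119603, 3426095211687500000000)%ZZ;
(169375000, 118945, 3412281150390625000000)%ZZ;
(169500000, 118292, 3398558733000000000000)%ZZ;
(169625000, 117643, 3384899761046875000000)%ZZ;
(169750000, 117000, 3371362312500000000000)%ZZ;
(169875000, 116361, 3357889375640625000000)%ZZ;
(170000000, 115727, 3344510300000000000000)%ZZ;
(170125000, 115098, 3331225663406250000000)%ZZ;
(170250000, 114473, 3318007059562500000000)%ZZ;
(170375000, 113852, 3304854940437500000000)%ZZ;
(170500000, 113236, 3291798829000000000000)%ZZ;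
(170625000, 112625, 3278839306640625000000)%ZZ;
(170750000, 112017, 3265918644562500000000)%ZZ;
(170875000, 111414, 3253095566343750000000)%ZZ;
(171000000, 110815, 3240341415000000000000)%ZZ;
(171125000, 110220, 3227656647187500000000)%ZZ;
(171250000, 109629, 3215041720312500000000)%ZZ;
(171375000, 109042, 3202497092531250000000)%ZZ;
(171500000, 108459, 3190023222750000000000)%ZZ;
(171625000, 107880, 3177620570625000000000)%ZZ;
(171750000, 107304, 3165260098500000000000)%ZZ;
(171875000, 106732, 3152971679687500000000)%ZZ;
(172000000, 106164, 3140755776000000000000)%ZZ;
(172125000, 105600, 3128612850000000000000)%ZZ;
(172250000, 105039, 3116513694937500000000)%ZZ;
(172375000, 104481, 3104458645640625000000)%ZZ;
(172500000, 103927, 3092477793750000000000)%ZZ;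
(172625000, 103376, 3080541805250000000000)%ZZ;
(172750000, 102829, 3068680859312500000000)%ZZ;
(172875000, 102285, 3056865536953125000000)%ZZ;
(173000000, 101745, 3045126105000000000000)%ZZ;
(173125000, 101207, 3033403087109375000000)%ZZ;
(173250000, 100673, 3021756723562500000000)%ZZ;
(173375000, 100142, 3010157424968750000000)%ZZ;
(173500000, 99614, 2998605531500000000000)%ZZ;
(173625000, 99089, 2987101383890625000000)%ZZ;
(173750000, 98567, 2975645323437500000000)%ZZ;
(173875000, 98048, 2964237692000000000000)%ZZ;
(174000000, 97532, 2952878832000000000000)%ZZ;
(174125000, 97019, 2941569086421875000000)%ZZ;
(174250000, 96508, 2930278435750000000000)%ZZ;
(174375000, 96001, 2919067906640625000000)%ZZ;
(174500000, 95496, 2907877074000000000000)%ZZ;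
(174625000, 94994, 2896736646031250000000)%ZZ;
(174750000, 94495, 2885646968437500000000)%ZZ;
(174875000, 93998, 2874577806218750000000)%ZZ;
(175000000, 93504, 2863560000000000000000)%ZZ;
(175125000, 93013, 2852593897078125000000)%ZZ;
(175250000, 92524, 2841649132750000000000)%ZZ;
(175375000, 92038, 2830756680343750000000)%ZZ;
(175500000, 91554, 2819886088500000000000)%ZZ;
(175625000, 91072, 2809037575000000000000)%ZZ;
(175750000, 90594, 2798273134125000000000)%ZZ;
(175875000, 90117, 2787500452078125000000)%ZZ;
(176000000, 89643, 2776781568000000000000)%ZZ;
(176125000, 89171, 2766085813296875000000)%ZZ;
(176250000, 88702, 2755444471875000000000)%ZZ;
(176375000, 88234, 2744795679906250000000)%ZZ;
(176500000, 87770, 2734232982500000000000)%ZZ;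
(176625000, 87307, 2723663276296875000000)%ZZ;
(176750000, 86846, 2713117890875000000000)%ZZ;
(176875000, 86388, 2702628332812500000000)%ZZ;
(177000000, 85932, 2692163628000000000000)%ZZ;
(177125000, 85478, 2681723999093750000000)%ZZ;
(177250000, 85026, 2671309669125000000000)%ZZ;
(177375000, 84576, 2660920861500000000000)%ZZ;
(177500000, 84128, 2650557800000000000000)%ZZ;
(177625000, 83683, 2640252259421875000000)%ZZ;
(177750000, 83239, 2629941407437500000000)%ZZ;
(177875000, 82797, 2619656975203125000000)%ZZ;
(178000000, 82357, 2609399188000000000000)%ZZ;
(178125000, 81919, 2599168271484375000000)%ZZ;
(178250000, 81483, 2588964451687500000000)%ZZ;
(178375000, 81049, 2578787955015625000000)%ZZ;
(178500000, 80617, 2568639008250000000000)%ZZ;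
(178625000, 80186, 2558485931656250000000)%ZZ;
(178750000, 79758, 2548392721875000000000)%ZZ;
(178875000, 79331, 2538295748296875000000)%ZZ;
(179000000, 78906, 2528227146000000000000)%ZZ;
(179125000, 78483, 2518187143546875000000)%ZZ;
(179250000, 78061, 2508143839312500000000)%ZZ;
(179375000, 77642, 2498161678906250000000)%ZZ;
(179500000, 77223, 2488144365750000000000)%ZZ;
(179625000, 76807, 2478188655984375000000)%ZZ;
(179750000, 76392, 2468230294500000000000)%ZZ;
(179875000, 75979, 2458301732171875000000)%ZZ;
(180000000, 75568, 2448403200000000000000)%ZZ;
(180125000, 75158, 2438502484343750000000)%ZZ;
(180250000, 74750, 2428632171875000000000)%ZZ;
(180375000, 74343, 2418759959484375000000)%ZZ;
(180500000, 73938, 2408918524500000000000)%ZZ;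
(180625000, 73534, 2399075474218750000000)%ZZ;
(180750000, 73132, 2389263576750000000000)%ZZ;
(180875000, 72731, 2379450349671875000000)%ZZ;
(181000000, 72332, 2369668652000000000000)%ZZ;
(181125000, 71935, 2359918717734375000000)%ZZ;
(181250000, 71538, 2350135078125000000000)%ZZ;
(181375000, 71144, 2340416386625000000000)%ZZ;
(181500000, 70750, 2330664187500000000000)%ZZ;
(181625000, 70359, 2320977406734375000000)%ZZ;
(181750000, 69968, 2311257317000000000000)%ZZ;
(181875000, 69579, 2301570038671875000000)%ZZ;
(182000000, 69191, 2291882684000000000000)%ZZ;
(182125000, 68805, 2282228522578125000000)%ZZ;
(182250000, 68420, 2272574576250000000000)%ZZ;
(182375000, 68036, 2262920945562500000000)%ZZ;
(182500000, 67653, 2253267731250000000000)%ZZ;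
(182625000, 67272, 2243648386125000000000)%ZZ;
(182750000, 66892, 2234029750750000000000)%ZZ;
(182875000, 66514, 2224445369781250000000)%ZZ;
(183000000, 66136, 2214828504000000000000)%ZZ;
(183125000, 65760, 2205246187500000000000)%ZZ;
(183250000, 65385, 2195665079062500000000)%ZZ;
(183375000, 65012, 2186118907312500000000)%ZZ;
(183500000, 64639, 2176540567750000000000)%ZZ;
(183625000, 64268, 2166997461687500000000)%ZZ;
(183750000, 63898, 2157456065625000000000)%ZZ;
(183875000, 63529, 2147916482640625000000)%ZZ;
(184000000, 63161, 2138378816000000000000)%ZZ;
(184125000, 62795, 2128877071171875000000)%ZZ;
(184250000, 62429, 2119343593812500000000)%ZZ;
(184375000, 62065, 2109846337890625000000)%ZZ;
(184500000, 61701, 2100317465250000000000)%ZZ;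
(184625000, 61339, 2090825114546875000000)%ZZ;
(184750000, 60978, 2081335396125000000000)%ZZ;
(184875000, 60618, 2071848414656250000000)%ZZ;
(185000000, 60259, 2062364275000000000000)%ZZ;
(185125000, 59901, 2052883082203125000000)%ZZ;
(185250000, 59544, 2043404941500000000000)%ZZ;
(185375000, 59188, 2033929958312500000000)%ZZ;
(185500000, 58834, 2024492648500000000000)%ZZ;
(185625000, 58480, 2015024343750000000000)%ZZ;
(185750000, 58127, 2005559513937500000000)%ZZ;
(185875000, 57775, 1996098265234375000000)%ZZ;
(186000000, 57424, 1986640704000000000000)%ZZ;
(186125000, 57074, 1977186936781250000000)%ZZ;
(186250000, 56726, 1967771759375000000000)%ZZ;
(186375000, 56378, 1958325947156250000000)%ZZ;
(186500000, 56031, 1948884249750000000000)%ZZ;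
(186625000, 55685, 1939446774453125000000)%ZZ;
(186750000, 55339, 1929978753187500000000)%ZZ;
(186875000, 54995, 1920549998046875000000)%ZZ;
(187000000, 54652, 1911125788000000000000)%ZZ;
(187125000, 54309, 1901671215328125000000)%ZZ;
(187250000, 53968, 1892256373000000000000)%ZZ;
(187375000, 53627, 1882811291046875000000)%ZZ;
(187500000, 53287, 1873371093750000000000)%ZZ;
(187625000, 52948, 1863935889812500000000)%ZZ;
(187750000, 52610, 1854505788125000000000)%ZZ;
(187875000, 52273, 1845080897765625000000)%ZZ;
(188000000, 51937, 1835661328000000000000)%ZZ;
(188125000, 51601, 1826211797265625000000)%ZZ;
(188250000, 51266, 1816767712125000000000)%ZZ;
(188375000, 50932, 1807329182312500000000)%ZZ;
(188500000, 50599, 1797896317750000000000)%ZZ;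
(188625000, 50267, 1788469228546875000000)%ZZ;
(188750000, 49935, 1779012398437500000000)%ZZ;
(188875000, 49605, 1769597143828125000000)%ZZ;
(189000000, 49275, 1760152275000000000000)%ZZ;
(189125000, 48945, 1750677761015625000000)%ZZ;
(189250000, 48617, 1741245202062500000000)%ZZ;
(189375000, 48289, 1731783125390625000000)%ZZ;
(189500000, 47962, 1722327410500000000000)%ZZ;
(189625000, 47636, 1712878168812500000000)%ZZ;
(189750000, 47311, 1703435511937500000000)%ZZ;
(189875000, 46986, 1693963499156250000000)%ZZ;
(190000000, 46662, 1684498200000000000000)%ZZ;
(190125000, 46338, 1675003579031250000000)%ZZ;
(190250000, 46016, 1665551996000000000000)%ZZ;
(190375000, 45694, 1656071220718750000000)%ZZ;
(190500000, 45373, 1646597513250000000000)%ZZ;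
(190625000, 45052, 1637094648437500000000)%ZZ;
(190750000, 44732, 1627598981750000000000)%ZZ;
(190875000, 44413, 1618110626203125000000)%ZZ;
(191000000, 44094, 1608593214000000000000)%ZZ;
(191125000, 43777, 1599119772765625000000)%ZZ;
(191250000, 43459, 1589580829687500000000)%ZZ;
(191375000, 43143, 1580086084734375000000)%ZZ;
(191500000, 42827, 1570562450750000000000)%ZZ;
(191625000, 42511, 1561009898109375000000)%ZZ;
(191750000, 42197, 1551501933312500000000)%ZZ;
(191875000, 41883, 1541965182421875000000)%ZZ;
(192000000, 41569, 1532399616000000000000)%ZZ;
(192125000, 41256, 1522842116625000000000)%ZZ;
(192250000, 40944, 1513292799000000000000)%ZZ;
(192375000, 40632, 1503714769875000000000)%ZZ;
(192500000, 40321, 1494145056250000000000)%ZZ;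
(192625000, 40011, 1484583773296875000000)%ZZ;
(192750000, 39701, 1474993883812500000000)%ZZ;
(192875000, 39392, 1465412559500000000000)%ZZ;
(193000000, 39083, 1455802667000000000000)%ZZ;
(193125000, 38775, 1446201474609375000000)%ZZ;
(193250000, 38467, 1436571752687500000000)%ZZ;
(193375000, 38160, 1426950866250000000000)%ZZ;
(193500000, 37853, 1417301489250000000000)%ZZ;
(193625000, 37547, 1407661083546875000000)%ZZ;
(193750000, 37242, 1398029765625000000000)%ZZ;
(193875000, 36937, 1388370064640625000000)%ZZ;
(194000000, 36632, 1378681952000000000000)%ZZ;
(194125000, 36329, 1369040768140625000000)%ZZ;
(194250000, 36025, 1359333576562500000000)%ZZ;
(194375000, 35722, 1349635766406250000000)%ZZ;
(194500000, 35420, 1339947455000000000000)%ZZ;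
(194625000, 35118, 1330230880968750000000)%ZZ;
(194750000, 34817, 1320523943562500000000)%ZZ;
(194875000, 34516, 1310788784312500000000)%ZZ;
(195000000, 34216, 1301063400000000000000)%ZZ;
(195125000, 33916, 1291309834937500000000)%ZZ;
(195250000, 33616, 1281528061000000000000)%ZZ;
(195375000, 33317, 1271756221453125000000)%ZZ;
(195500000, 33019, 1261994434750000000000)%ZZ;
(195625000, 32721, 1252204550390625000000)%ZZ;
(195750000, 32423, 1242386540437500000000)%ZZ;
(195875000, 32126, 1232578743968750000000)%ZZ;
(196000000, 31830, 1222781280000000000000)%ZZ;
(196125000, 31533, 1212917337703125000000)%ZZ;
(196250000, 31238, 1203102284375000000000)%ZZ;
(196375000, 30942, 1193220697218750000000)%ZZ;
(196500000, 30648, 1183388238000000000000)%ZZ;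
(196625000, 30353, 1173489189640625000000)%ZZ;
(196750000, 30059, 1163600798187500000000)%ZZ;
(196875000, 29765, 1153684423828125000000)%ZZ;
(197000000, 29472, 1143778848000000000000)%ZZ;
(197125000, 29179, 1133845332671875000000)%ZZ;
(197250000, 28887, 1123922757937500000000)%ZZ;
(197375000, 28595, 1113972287421875000000)%ZZ;
(197500000, 28304, 1104032900000000000000)%ZZ;
(197625000, 28012, 1094026605187500000000)%ZZ;
(197750000, 27722, 1084070542625000000000)%ZZ;
(197875000, 27431, 1074047518109375000000)%ZZ;
(198000000, 27141, 1064035764000000000000)%ZZ;
(198125000, 26852, 1054035401562500000000)%ZZ;
(198250000, 26562, 1043967946125000000000)%ZZ;
(198375000, 26274, 1033951279781250000000)%ZZ;
(198500000, 25985, 1023867466250000000000)%ZZ;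
(198625000, 25697, 1013795233390625000000)%ZZ;
(198750000, 25409, 1003695201562500000000)%ZZ;
(198875000, 25122, 993606895031250000000)%ZZ;
(199000000, 24835, 983490835000000000000)%ZZ;
(199125000, 24548, 973346994562500000000)%ZZ;
(199250000, 24262, 963215047375000000000)%ZZ;
(199375000, 23975, 953015615234375000000)%ZZ;
(199500000, 23690, 942867922500000000000)%ZZ;
(199625000, 23404, 932652691187500000000)%ZZ;
(199750000, 23119, 922449544937500000000)%ZZ;
(199875000, 22835, 912258606796875000000)%ZZ;
(200000000, 22550, 902000000000000000000)%ZZ;
(200125000, 22266, 891753647906250000000)%ZZ;
(200250000, 21983, 881519673937500000000)%ZZ;
(200375000, 21699, 871217901421875000000)%ZZ;
(200500000, 21416, 860928554000000000000)%ZZ;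
(200625000, 21133, 850611505078125000000)%ZZ;
(200750000, 20851, 840307028687500000000)%ZZ;
(200875000, 20569, 829974898140625000000)%ZZ;
(201000000, 20287, 819615087000000000000)%ZZ;
(201125000, 20005, 809227568828125000000)%ZZ;
(201250000, 19724, 798852818750000000000)%ZZ;
(201375000, 19443, 788450409421875000000)%ZZ;
(201500000, 19162, 778020314500000000000)%ZZ;
(201625000, 18882, 767603160281250000000)%ZZ;
(201750000, 18602, 757158368625000000000)%ZZ;
(201875000, 18322, 746685913281250000000)%ZZ;
(202000000, 18042, 736185768000000000000)%ZZ;
(202125000, 17763, 725698761046875000000)%ZZ;
(202250000, 17484, 715184112750000000000)%ZZ;
(202375000, 17205, 704641796953125000000)%ZZ;
(202500000, 16926, 694071787500000000000)%ZZ;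
(202625000, 16648, 683515115125000000000)%ZZ;
(202750000, 16370, 672930798125000000000)%ZZ;
(202875000, 16092, 662318810437500000000)%ZZ;
(203000000, 15815, 651720335000000000000)%ZZ;
(203125000, 15537, 641052978515625000000)%ZZ;
(203250000, 15260, 630399183750000000000)%ZZ;
(203375000, 14984, 619759077125000000000)%ZZ;
(203500000, 14707, 609049960750000000000)%ZZ;
(203625000, 14431, 598354582359375000000)%ZZ;
(203750000, 14155, 587631554687500000000)%ZZ;
(203875000, 13879, 576880851859375000000)%ZZ;
(204000000, 13603, 566102448000000000000)%ZZ;
(204125000, 13328, 555337984250000000000)%ZZ;
(204250000, 13053, 544545869812500000000)%ZZ;
(204375000, 12778, 533726078906250000000)%ZZ;
(204500000, 12503, 522878585750000000000)%ZZ;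
(204625000, 12228, 512003364562500000000)%ZZ;
(204750000, 11954, 501142312125000000000)%ZZ;
(204875000, 11680, 490253582500000000000)%ZZ;
(205000000, 11406, 479337150000000000000)%ZZ;
(205125000, 11132, 468392988937500000000)%ZZ;
(205250000, 10859, 457463201187500000000)%ZZ;
(205375000, 10585, 446463557265625000000)%ZZ;
(205500000, 10312, 435478338000000000000)%ZZ;
(205625000, 10039, 424465390234375000000)%ZZ;
(205750000, 9767, 413467021437500000000)%ZZ;
(205875000, 9494, 402398591343750000000)%ZZ;
(206000000, 9222, 391344792000000000000)%ZZ;
(206125000, 8950, 380263264843750000000)%ZZ;
(206250000, 8678, 369153984375000000000)%ZZ;
(206375000, 8406, 358016925093750000000)%ZZ;
(206500000, 8134, 346852061500000000000)%ZZ;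
(206625000, 7863, 335702061984375000000)%ZZ;
(206750000, 7591, 324481564937500000000)%ZZ;
(206875000, 7320, 313275984375000000000)%ZZ;
(207000000, 7049, 302042601000000000000)%ZZ;
(207125000, 6779, 290824290171875000000)%ZZ;
(207250000, 6508, 279535276750000000000)%ZZ;
(207375000, 6237, 268218384328125000000)%ZZ;
(207500000, 5967, 256916643750000000000)%ZZ;
(207625000, 5697, 245587077140625000000)%ZZ;
(207750000, 5427, 234229659187500000000)%ZZ;
(207875000, 5157, 222844364578125000000)%ZZ;
(208000000, 4887, 211431168000000000000)%ZZ;
(208125000, 4618, 200033360156250000000)%ZZ;
(208250000, 4348, 188564335750000000000)%ZZ;
(208375000, 4079, 177110753609375000000)%ZZ;
(208500000, 3810, 165629272500000000000)%ZZ;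
(208625000, 3541, 154119867203125000000)%ZZ;
(208750000, 3272, 142582512500000000000)%ZZ;
(208875000, 3003, 131017183171875000000)%ZZ;
(209000000, 2735, 119467535000000000000)%ZZ;
(209125000, 2466, 107846233031250000000)%ZZ;
(209250000, 2198, 96240666375000000000)%ZZ;
(209375000, 1929, 84563291015625000000)%ZZ;
(209500000, 1661, 72901705250000000000)%ZZ;
(209625000, 1393, 61212098390625000000)%ZZ;
(209750000, 1125, 49494445312500000000)%ZZ;
(209875000, 858, 37792768406250000000)%ZZ;
(210000000, 590, 26019000000000000000)%ZZ;
(210125000, 322, 14217110031250000000)%ZZ;
(210250000, 55, 2431278437500000000)%ZZ].
Definition bps : seq Z := [::
0%ZZ; 125000%ZZ; 250000%ZZ; 375000%ZZ; 500000%ZZ; 625000%ZZ; 750000%ZZ; 875000%ZZ; 1000000%ZZ; 1125000%ZZ; 1250000%ZZ; 1375000%ZZ; 1500000%ZZ; 1625000%ZZ; 1750000%ZZ; 1875000%ZZ; 2000000%ZZ; 2125000%ZZ; 2250000%ZZ; 2375000%ZZ; 2500000%ZZ; 2625000%ZZ; 2750000%ZZ; 2875000%ZZ; 3000000%ZZ; 3125000%ZZ; 3250000%ZZ; 3375000%ZZ; 3500000%ZZ; 3625000%ZZ; 3750000%ZZ; 3875000%ZZ; 4000000%ZZ; 4125000%ZZ; 4250000%ZZ; 4375000%ZZ; 4500000%ZZ; 4625000%ZZ; 4750000%ZZ; 4875000%ZZ; 5000000%ZZ; 5125000%ZZ; 5250000%ZZ; 5375000%ZZ; 5500000%ZZ;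 5625000%ZZ; 5750000%ZZ; 5875000%ZZ; 6000000%ZZ; 6125000%ZZ; 6250000%ZZ; 6375000%ZZ; 6500000%ZZ; 6625000%ZZ; 6750000%ZZ; 6875000%ZZ; 7000000%ZZ; 7125000%ZZ; 7250000%ZZ; 7375000%ZZ; 7500000%ZZ; 7625000%ZZ; 7750000%ZZ; 7875000%ZZ; 8000000%ZZ; 8125000%ZZ; 8250000%ZZ; 8375000%ZZ; 8500000%ZZ; 8625000%ZZ; 8750000%ZZ; 8875000%ZZ; 9000000%ZZ; 9125000%ZZ; 9250000%ZZ; 9375000%ZZ; 9500000%ZZ; 9625000%ZZ; 9750000%ZZ; 9875000%ZZ; 10000000%ZZ; 10125000%ZZ; 10250000%ZZ; 10375000%ZZ; 10500000%ZZ; 10625000%ZZ; 10750000%ZZ; 10875000%ZZ; 11000000%ZZ; 11125000%ZZ; 11250000%ZZ; 11375000%ZZ; 11500000%ZZ; 11625000%ZZ; 11750000%ZZ; 11875000%ZZ; 12000000%ZZ; 12125000%ZZ; 12250000%ZZ; 12375000%ZZ; 12500000%ZZ; 12625000%ZZ; 12750000%ZZ; 12875000%ZZ; 13000000%ZZ; 13125000%ZZ; 13250000%ZZ; 13375000%ZZ; 13500000%ZZ; 13625000%ZZ; 13750000%ZZ; 13875000%ZZ; 14000000%ZZ; 14125000%ZZ; 14250000%ZZ; 14375000%ZZ; 14500000%ZZ; 14625000%ZZ; 14750000%ZZ; 14875000%ZZ; 15000000%ZZ; 15125000%ZZ; 15250000%ZZ; 15375000%ZZ; 15500000%ZZ;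 15625000%ZZ; 15750000%ZZ; 15875000%ZZ; 16000000%ZZ; 16125000%ZZ; 16250000%ZZ; 16375000%ZZ; 16500000%ZZ; 16625000%ZZ; 16750000%ZZ; 16875000%ZZ; 17000000%ZZ; 17125000%ZZ; 17250000%ZZ; 17375000%ZZ; 17500000%ZZ; 17625000%ZZ; 17750000%ZZ; 17875000%ZZ; 18000000%ZZ; 18125000%ZZ; 18250000%ZZ; 18375000%ZZ; 18500000%ZZ; 18625000%ZZ; 18750000%ZZ; 18875000%ZZ; 19000000%ZZ; 19125000%ZZ; 19250000%ZZ; 19375000%ZZ; 19500000%ZZ; 19625000%ZZ; 19750000%ZZ; 19875000%ZZ; 20000000%ZZ; 20125000%ZZ; 20250000%ZZ; 20375000%ZZ; 20500000%ZZ; 20625000%ZZ; 20750000%ZZ; 20875000%ZZ; 21000000%ZZ; 21125000%ZZ; 21250000%ZZ; 21375000%ZZ; 21500000%ZZ; 21625000%ZZ; 21750000%ZZ; 21875000%ZZ; 22000000%ZZ; 22125000%ZZ; 22250000%ZZ; 22375000%ZZ; 22500000%ZZ; 22625000%ZZ; 22750000%ZZ; 22875000%ZZ; 23000000%ZZ; 23125000%ZZ; 23250000%ZZ; 23375000%ZZ; 23500000%ZZ; 23625000%ZZ; 23750000%ZZ; 23875000%ZZ; 24000000%ZZ; 24125000%ZZ; 24250000%ZZ; 24375000%ZZ; 24500000%ZZ; 24625000%ZZ; 24750000%ZZ; 24875000%ZZ; 25000000%ZZ; 25125000%ZZ; 25250000%ZZ; 25375000%ZZ; 25500000%ZZ;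 25625000%ZZ; 25750000%ZZ; 25875000%ZZ; 26000000%ZZ; 26125000%ZZ; 26250000%ZZ; 26375000%ZZ; 26500000%ZZ; 26625000%ZZ; 26750000%ZZ; 26875000%ZZ; 27000000%ZZ; 27125000%ZZ; 27250000%ZZ; 27375000%ZZ; 27500000%ZZ; 27625000%ZZ; 27750000%ZZ; 27875000%ZZ; 28000000%ZZ; 28125000%ZZ; 28250000%ZZ; 28375000%ZZ; 28500000%ZZ; 28625000%ZZ; 28750000%ZZ; 28875000%ZZ; 29000000%ZZ; 29125000%ZZ; 29250000%ZZ; 29375000%ZZ; 29500000%ZZ; 29625000%ZZ; 29750000%ZZ; 29875000%ZZ; 30000000%ZZ; 30125000%ZZ; 30250000%ZZ; 30375000%ZZ; 30500000%ZZ; 30625000%ZZ; 30750000%ZZ; 30875000%ZZ; 31000000%ZZ; 31125000%ZZ; 31250000%ZZ; 31375000%ZZ; 31500000%ZZ; 31625000%ZZ; 31750000%ZZ; 31875000%ZZ; 32000000%ZZ; 32125000%ZZ; 32250000%ZZ; 32375000%ZZ; 32500000%ZZ; 32625000%ZZ; 32750000%ZZ; 32875000%ZZ; 33000000%ZZ; 33125000%ZZ; 33250000%ZZ; 33375000%ZZ; 33500000%ZZ; 33625000%ZZ; 33750000%ZZ; 33875000%ZZ; 34000000%ZZ; 34125000%ZZ; 34250000%ZZ; 34375000%ZZ; 34500000%ZZ; 34625000%ZZ; 34750000%ZZ; 34875000%ZZ; 35000000%ZZ; 35125000%ZZ; 35250000%ZZ; 35375000%ZZ; 35500000%ZZ;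 35625000%ZZ; 35750000%ZZ; 35875000%ZZ; 36000000%ZZ; 36125000%ZZ; 36250000%ZZ; 36375000%ZZ; 36500000%ZZ; 36625000%ZZ; 36750000%ZZ; 36875000%ZZ; 37000000%ZZ; 37125000%ZZ; 62875000%ZZ; 63000000%ZZ; 63125000%ZZ; 63250000%ZZ; 63375000%ZZ; 63500000%ZZ; 63625000%ZZ; 63750000%ZZ; 63875000%ZZ; 64000000%ZZ; 64125000%ZZ; 64250000%ZZ; 64375000%ZZ; 64500000%ZZ; 64625000%ZZ; 64750000%ZZ; 64875000%ZZ; 65000000%ZZ; 65125000%ZZ; 65250000%ZZ; 65375000%ZZ; 65500000%ZZ; 65625000%ZZ; 65750000%ZZ; 65875000%ZZ; 66000000%ZZ; 66125000%ZZ; 66250000%ZZ; 66375000%ZZ; 66500000%ZZ; 66625000%ZZ; 66750000%ZZ; 66875000%ZZ; 67000000%ZZ; 67125000%ZZ; 67250000%ZZ; 67375000%ZZ; 67500000%ZZ; 67625000%ZZ; 67750000%ZZ; 67875000%ZZ; 68000000%ZZ; 68125000%ZZ; 68250000%ZZ; 68375000%ZZ; 68500000%ZZ; 68625000%ZZ; 68750000%ZZ; 68875000%ZZ; 69000000%ZZ; 69125000%ZZ; 69250000%ZZ; 69375000%ZZ; 69500000%ZZ; 69625000%ZZ; 69750000%ZZ; 69875000%ZZ; 70000000%ZZ; 70125000%ZZ; 70250000%ZZ; 70375000%ZZ; 70500000%ZZ; 70625000%ZZ; 70750000%ZZ; 70875000%ZZ; 71000000%ZZ; 71125000%ZZ;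 71250000%ZZ; 71375000%ZZ; 71500000%ZZ; 71625000%ZZ; 71750000%ZZ; 71875000%ZZ; 72000000%ZZ; 72125000%ZZ; 72250000%ZZ; 72375000%ZZ; 72500000%ZZ; 72625000%ZZ; 72750000%ZZ; 72875000%ZZ; 73000000%ZZ; 73125000%ZZ; 73250000%ZZ; 73375000%ZZ; 73500000%ZZ; 73625000%ZZ; 73750000%ZZ; 73875000%ZZ; 74000000%ZZ; 74125000%ZZ; 74250000%ZZ; 74375000%ZZ; 74500000%ZZ; 74625000%ZZ; 74750000%ZZ; 74875000%ZZ; 75000000%ZZ; 75125000%ZZ; 75250000%ZZ; 75375000%ZZ; 75500000%ZZ; 75625000%ZZ; 75750000%ZZ; 75875000%ZZ; 76000000%ZZ; 76125000%ZZ; 76250000%ZZ; 76375000%ZZ; 76500000%ZZ; 76625000%ZZ; 76750000%ZZ; 76875000%ZZ; 77000000%ZZ; 77125000%ZZ; 77250000%ZZ; 77375000%ZZ; 77500000%ZZ; 77625000%ZZ; 77750000%ZZ; 77875000%ZZ; 78000000%ZZ; 78125000%ZZ; 78250000%ZZ; 78375000%ZZ; 78500000%ZZ; 78625000%ZZ; 78750000%ZZ; 78875000%ZZ; 79000000%ZZ; 79125000%ZZ; 79250000%ZZ; 79375000%ZZ; 79500000%ZZ; 79625000%ZZ; 79750000%ZZ; 79875000%ZZ; 80000000%ZZ; 80125000%ZZ; 80250000%ZZ; 80375000%ZZ; 80500000%ZZ; 80625000%ZZ; 80750000%ZZ; 80875000%ZZ; 81000000%ZZ; 81125000%ZZ;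 81250000%ZZ; 81375000%ZZ; 81500000%ZZ; 81625000%ZZ; 81750000%ZZ; 81875000%ZZ; 82000000%ZZ; 82125000%ZZ; 82250000%ZZ; 82375000%ZZ; 82500000%ZZ; 82625000%ZZ; 82750000%ZZ; 82875000%ZZ; 83000000%ZZ; 83125000%ZZ; 83250000%ZZ; 83375000%ZZ; 83500000%ZZ; 83625000%ZZ; 83750000%ZZ; 83875000%ZZ; 84000000%ZZ; 84125000%ZZ; 84250000%ZZ; 84375000%ZZ; 84500000%ZZ; 84625000%ZZ; 84750000%ZZ; 84875000%ZZ; 85000000%ZZ; 85125000%ZZ; 85250000%ZZ; 85375000%ZZ; 85500000%ZZ; 85625000%ZZ; 85750000%ZZ; 85875000%ZZ; 86000000%ZZ; 86125000%ZZ; 86250000%ZZ; 86375000%ZZ; 86500000%ZZ; 86625000%ZZ; 86750000%ZZ; 86875000%ZZ; 87000000%ZZ; 87125000%ZZ; 87250000%ZZ; 87375000%ZZ; 87500000%ZZ; 87625000%ZZ; 87750000%ZZ; 87875000%ZZ; 88000000%ZZ; 88125000%ZZ; 88250000%ZZ; 88375000%ZZ; 88500000%ZZ; 88625000%ZZ; 88750000%ZZ; 88875000%ZZ; 89000000%ZZ; 89125000%ZZ; 89250000%ZZ; 89375000%ZZ; 89500000%ZZ; 89625000%ZZ; 89750000%ZZ; 89875000%ZZ; 90000000%ZZ; 90125000%ZZ; 90250000%ZZ; 90375000%ZZ; 90500000%ZZ; 90625000%ZZ; 90750000%ZZ; 90875000%ZZ; 91000000%ZZ; 91125000%ZZ;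 91250000%ZZ; 91375000%ZZ; 91500000%ZZ; 91625000%ZZ; 91750000%ZZ; 91875000%ZZ; 92000000%ZZ; 92125000%ZZ; 92250000%ZZ; 92375000%ZZ; 92500000%ZZ; 92625000%ZZ; 92750000%ZZ; 92875000%ZZ; 93000000%ZZ; 93125000%ZZ; 93250000%ZZ; 93375000%ZZ; 93500000%ZZ; 93625000%ZZ; 93750000%ZZ; 93875000%ZZ; 94000000%ZZ; 94125000%ZZ; 94250000%ZZ; 94375000%ZZ; 94500000%ZZ; 94625000%ZZ; 94750000%ZZ; 94875000%ZZ; 95000000%ZZ; 95125000%ZZ; 95250000%ZZ; 95375000%ZZ; 95500000%ZZ; 95625000%ZZ; 95750000%ZZ; 95875000%ZZ; 96000000%ZZ; 96125000%ZZ; 96250000%ZZ; 96375000%ZZ; 96500000%ZZ; 96625000%ZZ; 96750000%ZZ; 96875000%ZZ; 97000000%ZZ; 97125000%ZZ; 97250000%ZZ; 97375000%ZZ; 97500000%ZZ; 97625000%ZZ; 97750000%ZZ; 97875000%ZZ; 98000000%ZZ; 98125000%ZZ; 98250000%ZZ; 98375000%ZZ; 98500000%ZZ; 98625000%ZZ; 98750000%ZZ; 98875000%ZZ; 99000000%ZZ; 99125000%ZZ; 99250000%ZZ; 99375000%ZZ; 99500000%ZZ; 99625000%ZZ; 99750000%ZZ; 99875000%ZZ; 100000000%ZZ; 100125000%ZZ; 100250000%ZZ; 100375000%ZZ; 100500000%ZZ; 100625000%ZZ; 100750000%ZZ; 100875000%ZZ; 101000000%ZZ; 101125000%ZZ;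 101250000%ZZ; 101375000%ZZ; 101500000%ZZ; 101625000%ZZ; 101750000%ZZ; 101875000%ZZ; 102000000%ZZ; 102125000%ZZ; 102250000%ZZ; 102375000%ZZ; 102500000%ZZ; 102625000%ZZ; 102750000%ZZ; 102875000%ZZ; 103000000%ZZ; 103125000%ZZ; 103250000%ZZ; 103375000%ZZ; 103500000%ZZ; 103625000%ZZ; 103750000%ZZ; 103875000%ZZ; 104000000%ZZ; 104125000%ZZ; 104250000%ZZ; 104375000%ZZ; 104500000%ZZ; 104625000%ZZ; 104750000%ZZ; 104875000%ZZ; 105000000%ZZ; 105125000%ZZ; 105250000%ZZ; 105375000%ZZ; 105500000%ZZ; 105625000%ZZ; 105750000%ZZ; 105875000%ZZ; 106000000%ZZ; 106125000%ZZ; 106250000%ZZ; 106375000%ZZ; 106500000%ZZ; 106625000%ZZ; 106750000%ZZ; 106875000%ZZ; 107000000%ZZ; 107125000%ZZ; 107250000%ZZ; 107375000%ZZ; 107500000%ZZ; 107625000%ZZ; 107750000%ZZ; 107875000%ZZ; 108000000%ZZ; 108125000%ZZ; 108250000%ZZ; 108375000%ZZ; 108500000%ZZ; 108625000%ZZ; 108750000%ZZ; 108875000%ZZ; 109000000%ZZ; 109125000%ZZ; 109250000%ZZ; 109375000%ZZ; 109500000%ZZ; 109625000%ZZ; 109750000%ZZ; 109875000%ZZ; 110000000%ZZ; 110125000%ZZ; 110250000%ZZ; 110375000%ZZ; 110500000%ZZ; 110625000%ZZ; 110750000%ZZ; 110875000%ZZ; 111000000%ZZ; 111125000%ZZ;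 111250000%ZZ; 111375000%ZZ; 111500000%ZZ; 111625000%ZZ; 111750000%ZZ; 111875000%ZZ; 112000000%ZZ; 112125000%ZZ; 112250000%ZZ; 112375000%ZZ; 112500000%ZZ; 112625000%ZZ; 112750000%ZZ; 112875000%ZZ; 113000000%ZZ; 113125000%ZZ; 113250000%ZZ; 113375000%ZZ; 113500000%ZZ; 113625000%ZZ; 113750000%ZZ; 113875000%ZZ; 114000000%ZZ; 114125000%ZZ; 114250000%ZZ; 114375000%ZZ; 114500000%ZZ; 114625000%ZZ; 114750000%ZZ; 114875000%ZZ; 115000000%ZZ; 115125000%ZZ; 115250000%ZZ; 115375000%ZZ; 115500000%ZZ; 115625000%ZZ; 115750000%ZZ; 115875000%ZZ; 116000000%ZZ; 116125000%ZZ; 116250000%ZZ; 116375000%ZZ; 116500000%ZZ; 116625000%ZZ; 116750000%ZZ; 116875000%ZZ; 117000000%ZZ; 117125000%ZZ; 117250000%ZZ; 117375000%ZZ; 117500000%ZZ; 117625000%ZZ; 117750000%ZZ; 117875000%ZZ; 118000000%ZZ; 118125000%ZZ; 118250000%ZZ; 118375000%ZZ; 118500000%ZZ; 118625000%ZZ; 118750000%ZZ; 118875000%ZZ; 119000000%ZZ; 119125000%ZZ; 119250000%ZZ; 119375000%ZZ; 119500000%ZZ; 119625000%ZZ; 119750000%ZZ; 119875000%ZZ; 120000000%ZZ; 120125000%ZZ; 120250000%ZZ; 120375000%ZZ; 120500000%ZZ; 120625000%ZZ; 120750000%ZZ; 120875000%ZZ; 121000000%ZZ; 121125000%ZZ;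 121250000%ZZ; 121375000%ZZ; 121500000%ZZ; 121625000%ZZ; 121750000%ZZ; 121875000%ZZ; 122000000%ZZ; 122125000%ZZ; 122250000%ZZ; 122375000%ZZ; 122500000%ZZ; 122625000%ZZ; 122750000%ZZ; 122875000%ZZ; 123000000%ZZ; 123125000%ZZ; 123250000%ZZ; 123375000%ZZ; 123500000%ZZ; 123625000%ZZ; 123750000%ZZ; 123875000%ZZ; 124000000%ZZ; 124125000%ZZ; 124250000%ZZ; 124375000%ZZ; 124500000%ZZ; 124625000%ZZ; 124750000%ZZ; 124875000%ZZ; 125000000%ZZ; 125125000%ZZ; 125250000%ZZ; 125375000%ZZ; 125500000%ZZ; 125625000%ZZ; 125750000%ZZ; 125875000%ZZ; 126000000%ZZ; 126125000%ZZ; 126250000%ZZ; 126375000%ZZ; 126500000%ZZ; 126625000%ZZ; 126750000%ZZ; 126875000%ZZ; 127000000%ZZ; 127125000%ZZ; 127250000%ZZ; 127375000%ZZ; 127500000%ZZ; 127625000%ZZ; 127750000%ZZ; 127875000%ZZ; 128000000%ZZ; 128125000%ZZ; 128250000%ZZ; 128375000%ZZ; 128500000%ZZ; 128625000%ZZ; 128750000%ZZ; 128875000%ZZ; 129000000%ZZ; 129125000%ZZ; 129250000%ZZ; 129375000%ZZ; 129500000%ZZ; 129625000%ZZ; 129750000%ZZ; 129875000%ZZ; 130000000%ZZ; 130125000%ZZ; 130250000%ZZ; 130375000%ZZ; 130500000%ZZ; 130625000%ZZ; 130750000%ZZ; 130875000%ZZ; 131000000%ZZ; 131125000%ZZ;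 131250000%ZZ; 131375000%ZZ; 131500000%ZZ; 131625000%ZZ; 131750000%ZZ; 131875000%ZZ; 132000000%ZZ; 132125000%ZZ; 132250000%ZZ; 132375000%ZZ; 132500000%ZZ; 132625000%ZZ; 132750000%ZZ; 132875000%ZZ; 133000000%ZZ; 133125000%ZZ; 133250000%ZZ; 133375000%ZZ; 133500000%ZZ; 133625000%ZZ; 133750000%ZZ; 133875000%ZZ; 134000000%ZZ; 134125000%ZZ; 134250000%ZZ; 134375000%ZZ; 134500000%ZZ; 134625000%ZZ; 134750000%ZZ; 134875000%ZZ; 135000000%ZZ; 135125000%ZZ; 135250000%ZZ; 135375000%ZZ; 135500000%ZZ; 135625000%ZZ; 135750000%ZZ; 135875000%ZZ; 136000000%ZZ; 136125000%ZZ; 136250000%ZZ; 136375000%ZZ; 136500000%ZZ; 136625000%ZZ; 136750000%ZZ; 136875000%ZZ; 137000000%ZZ; 137125000%ZZ; 137250000%ZZ; 137375000%ZZ; 137500000%ZZ; 137625000%ZZ; 137750000%ZZ; 137875000%ZZ; 138000000%ZZ; 138125000%ZZ; 138250000%ZZ; 138375000%ZZ; 138500000%ZZ; 138625000%ZZ; 138750000%ZZ; 138875000%ZZ; 139000000%ZZ; 139125000%ZZ; 139250000%ZZ; 139375000%ZZ; 139500000%ZZ; 139625000%ZZ; 139750000%ZZ; 139875000%ZZ; 140000000%ZZ; 140125000%ZZ; 140250000%ZZ; 140375000%ZZ; 140500000%ZZ; 140625000%ZZ; 140750000%ZZ; 140875000%ZZ; 141000000%ZZ; 141125000%ZZ;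 141250000%ZZ; 141375000%ZZ; 141500000%ZZ; 141625000%ZZ; 141750000%ZZ; 141875000%ZZ; 142000000%ZZ; 142125000%ZZ; 142250000%ZZ; 142375000%ZZ; 142500000%ZZ; 142625000%ZZ; 142750000%ZZ; 142875000%ZZ; 143000000%ZZ; 143125000%ZZ; 143250000%ZZ; 143375000%ZZ; 143500000%ZZ; 143625000%ZZ; 143750000%ZZ; 143875000%ZZ; 144000000%ZZ; 144125000%ZZ; 144250000%ZZ; 144375000%ZZ; 144500000%ZZ; 144625000%ZZ; 144750000%ZZ; 144875000%ZZ; 145000000%ZZ; 145125000%ZZ; 145250000%ZZ; 145375000%ZZ; 145500000%ZZ; 145625000%ZZ; 145750000%ZZ; 145875000%ZZ; 146000000%ZZ; 146125000%ZZ; 146250000%ZZ; 146375000%ZZ; 146500000%ZZ; 146625000%ZZ; 146750000%ZZ; 146875000%ZZ; 147000000%ZZ; 147125000%ZZ; 147250000%ZZ; 147375000%ZZ; 147500000%ZZ; 147625000%ZZ; 147750000%ZZ; 147875000%ZZ; 148000000%ZZ; 148125000%ZZ; 148250000%ZZ; 148375000%ZZ; 148500000%ZZ; 148625000%ZZ; 148750000%ZZ; 148875000%ZZ; 149000000%ZZ; 149125000%ZZ; 149250000%ZZ; 149375000%ZZ; 149500000%ZZ; 149625000%ZZ; 149750000%ZZ; 149875000%ZZ; 150000000%ZZ; 150125000%ZZ; 150250000%ZZ; 150375000%ZZ; 150500000%ZZ; 150625000%ZZ; 150750000%ZZ; 150875000%ZZ; 151000000%ZZ; 151125000%ZZ;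 151250000%ZZ; 151375000%ZZ; 151500000%ZZ; 151625000%ZZ; 151750000%ZZ; 151875000%ZZ; 152000000%ZZ; 152125000%ZZ; 152250000%ZZ; 152375000%ZZ; 152500000%ZZ; 152625000%ZZ; 152750000%ZZ; 152875000%ZZ; 153000000%ZZ; 153125000%ZZ; 153250000%ZZ; 153375000%ZZ; 153500000%ZZ; 153625000%ZZ; 153750000%ZZ; 153875000%ZZ; 154000000%ZZ; 154125000%ZZ; 154250000%ZZ; 154375000%ZZ; 154500000%ZZ; 154625000%ZZ; 154750000%ZZ; 154875000%ZZ; 155000000%ZZ; 155125000%ZZ; 155250000%ZZ; 155375000%ZZ; 155500000%ZZ; 155625000%ZZ; 155750000%ZZ; 155875000%ZZ; 156000000%ZZ; 156125000%ZZ; 156250000%ZZ; 156375000%ZZ; 156500000%ZZ; 156625000%ZZ; 156750000%ZZ; 156875000%ZZ; 157000000%ZZ; 157125000%ZZ; 157250000%ZZ; 157375000%ZZ; 157500000%ZZ; 157625000%ZZ; 157750000%ZZ; 157875000%ZZ; 158000000%ZZ; 158125000%ZZ; 158250000%ZZ; 158375000%ZZ; 158500000%ZZ; 158625000%ZZ; 158750000%ZZ; 158875000%ZZ; 159000000%ZZ; 159125000%ZZ; 159250000%ZZ; 159375000%ZZ; 159500000%ZZ; 159625000%ZZ; 159750000%ZZ; 159875000%ZZ; 160000000%ZZ; 160125000%ZZ; 160250000%ZZ; 160375000%ZZ; 160500000%ZZ; 160625000%ZZ; 160750000%ZZ; 160875000%ZZ; 161000000%ZZ; 161125000%ZZ;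 161250000%ZZ; 161375000%ZZ; 161500000%ZZ; 161625000%ZZ; 161750000%ZZ; 161875000%ZZ; 162000000%ZZ; 162125000%ZZ; 162250000%ZZ; 162375000%ZZ; 162500000%ZZ; 162625000%ZZ; 162750000%ZZ; 162875000%ZZ; 163000000%ZZ; 163125000%ZZ; 163250000%ZZ; 163375000%ZZ; 163500000%ZZ; 163625000%ZZ; 163750000%ZZ; 163875000%ZZ; 164000000%ZZ; 164125000%ZZ; 164250000%ZZ; 164375000%ZZ; 164500000%ZZ; 164625000%ZZ; 164750000%ZZ; 164875000%ZZ; 165000000%ZZ; 165125000%ZZ; 165250000%ZZ; 165375000%ZZ; 165500000%ZZ; 165625000%ZZ; 165750000%ZZ; 165875000%ZZ; 166000000%ZZ; 166125000%ZZ; 166250000%ZZ; 166375000%ZZ; 166500000%ZZ; 166625000%ZZ; 166750000%ZZ; 166875000%ZZ; 167000000%ZZ; 167125000%ZZ; 167250000%ZZ; 167375000%ZZ; 167500000%ZZ; 167625000%ZZ; 167750000%ZZ; 167875000%ZZ; 168000000%ZZ; 168125000%ZZ; 168250000%ZZ; 168375000%ZZ; 168500000%ZZ; 168625000%ZZ; 168750000%ZZ; 168875000%ZZ; 169000000%ZZ; 169125000%ZZ; 169250000%ZZ; 169375000%ZZ; 169500000%ZZ; 169625000%ZZ; 169750000%ZZ; 169875000%ZZ; 170000000%ZZ; 170125000%ZZ; 170250000%ZZ; 170375000%ZZ; 170500000%ZZ; 170625000%ZZ; 170750000%ZZ; 170875000%ZZ; 171000000%ZZ; 171125000%ZZ;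 171250000%ZZ; 171375000%ZZ; 171500000%ZZ; 171625000%ZZ; 171750000%ZZ; 171875000%ZZ; 172000000%ZZ; 172125000%ZZ; 172250000%ZZ; 172375000%ZZ; 172500000%ZZ; 172625000%ZZ; 172750000%ZZ; 172875000%ZZ; 173000000%ZZ; 173125000%ZZ; 173250000%ZZ; 173375000%ZZ; 173500000%ZZ; 173625000%ZZ; 173750000%ZZ; 173875000%ZZ; 174000000%ZZ; 174125000%ZZ; 174250000%ZZ; 174375000%ZZ; 174500000%ZZ; 174625000%ZZ; 174750000%ZZ; 174875000%ZZ; 175000000%ZZ; 175125000%ZZ; 175250000%ZZ; 175375000%ZZ; 175500000%ZZ; 175625000%ZZ; 175750000%ZZ; 175875000%ZZ; 176000000%ZZ; 176125000%ZZ; 176250000%ZZ; 176375000%ZZ; 176500000%ZZ; 176625000%ZZ; 176750000%ZZ; 176875000%ZZ; 177000000%ZZ; 177125000%ZZ; 177250000%ZZ; 177375000%ZZ; 177500000%ZZ; 177625000%ZZ; 177750000%ZZ; 177875000%ZZ; 178000000%ZZ; 178125000%ZZ; 178250000%ZZ; 178375000%ZZ; 178500000%ZZ; 178625000%ZZ; 178750000%ZZ; 178875000%ZZ; 179000000%ZZ; 179125000%ZZ; 179250000%ZZ; 179375000%ZZ; 179500000%ZZ; 179625000%ZZ; 179750000%ZZ; 179875000%ZZ; 180000000%ZZ; 180125000%ZZ; 180250000%ZZ; 180375000%ZZ; 180500000%ZZ; 180625000%ZZ; 180750000%ZZ; 180875000%ZZ; 181000000%ZZ; 181125000%ZZ;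 181250000%ZZ; 181375000%ZZ; 181500000%ZZ; 181625000%ZZ; 181750000%ZZ; 181875000%ZZ; 182000000%ZZ; 182125000%ZZ; 182250000%ZZ; 182375000%ZZ; 182500000%ZZ; 182625000%ZZ; 182750000%ZZ; 182875000%ZZ; 183000000%ZZ; 183125000%ZZ; 183250000%ZZ; 183375000%ZZ; 183500000%ZZ; 183625000%ZZ; 183750000%ZZ; 183875000%ZZ; 184000000%ZZ; 184125000%ZZ; 184250000%ZZ; 184375000%ZZ; 184500000%ZZ; 184625000%ZZ; 184750000%ZZ; 184875000%ZZ; 185000000%ZZ; 185125000%ZZ; 185250000%ZZ; 185375000%ZZ; 185500000%ZZ; 185625000%ZZ; 185750000%ZZ; 185875000%ZZ; 186000000%ZZ; 186125000%ZZ; 186250000%ZZ; 186375000%ZZ; 186500000%ZZ; 186625000%ZZ; 186750000%ZZ; 186875000%ZZ; 187000000%ZZ; 187125000%ZZ; 187250000%ZZ; 187375000%ZZ; 187500000%ZZ; 187625000%ZZ; 187750000%ZZ; 187875000%ZZ; 188000000%ZZ; 188125000%ZZ; 188250000%ZZ; 188375000%ZZ; 188500000%ZZ; 188625000%ZZ; 188750000%ZZ; 188875000%ZZ; 189000000%ZZ; 189125000%ZZ; 189250000%ZZ; 189375000%ZZ; 189500000%ZZ; 189625000%ZZ; 189750000%ZZ; 189875000%ZZ; 190000000%ZZ; 190125000%ZZ; 190250000%ZZ; 190375000%ZZ; 190500000%ZZ; 190625000%ZZ; 190750000%ZZ; 190875000%ZZ; 191000000%ZZ; 191125000%ZZ;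 191250000%ZZ; 191375000%ZZ; 191500000%ZZ; 191625000%ZZ; 191750000%ZZ; 191875000%ZZ; 192000000%ZZ; 192125000%ZZ; 192250000%ZZ; 192375000%ZZ; 192500000%ZZ; 192625000%ZZ; 192750000%ZZ; 192875000%ZZ; 193000000%ZZ; 193125000%ZZ; 193250000%ZZ; 193375000%ZZ; 193500000%ZZ; 193625000%ZZ; 193750000%ZZ; 193875000%ZZ; 194000000%ZZ; 194125000%ZZ; 194250000%ZZ; 194375000%ZZ; 194500000%ZZ; 194625000%ZZ; 194750000%ZZ; 194875000%ZZ; 195000000%ZZ; 195125000%ZZ; 195250000%ZZ; 195375000%ZZ; 195500000%ZZ; 195625000%ZZ; 195750000%ZZ; 195875000%ZZ; 196000000%ZZ; 196125000%ZZ; 196250000%ZZ; 196375000%ZZ; 196500000%ZZ; 196625000%ZZ; 196750000%ZZ; 196875000%ZZ; 197000000%ZZ; 197125000%ZZ; 197250000%ZZ; 197375000%ZZ; 197500000%ZZ; 197625000%ZZ; 197750000%ZZ; 197875000%ZZ; 198000000%ZZ; 198125000%ZZ; 198250000%ZZ; 198375000%ZZ; 198500000%ZZ; 198625000%ZZ; 198750000%ZZ; 198875000%ZZ; 199000000%ZZ; 199125000%ZZ; 199250000%ZZ; 199375000%ZZ; 199500000%ZZ; 199625000%ZZ; 199750000%ZZ; 199875000%ZZ; 200000000%ZZ; 200125000%ZZ; 200250000%ZZ; 200375000%ZZ; 200500000%ZZ; 200625000%ZZ; 200750000%ZZ; 200875000%ZZ; 201000000%ZZ; 201125000%ZZ;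 201250000%ZZ; 201375000%ZZ; 201500000%ZZ; 201625000%ZZ; 201750000%ZZ; 201875000%ZZ; 202000000%ZZ; 202125000%ZZ; 202250000%ZZ; 202375000%ZZ; 202500000%ZZ; 202625000%ZZ; 202750000%ZZ; 202875000%ZZ; 203000000%ZZ; 203125000%ZZ; 203250000%ZZ; 203375000%ZZ; 203500000%ZZ; 203625000%ZZ; 203750000%ZZ; 203875000%ZZ; 204000000%ZZ; 204125000%ZZ; 204250000%ZZ; 204375000%ZZ; 204500000%ZZ; 204625000%ZZ; 204750000%ZZ; 204875000%ZZ; 205000000%ZZ; 205125000%ZZ; 205250000%ZZ; 205375000%ZZ; 205500000%ZZ; 205625000%ZZ; 205750000%ZZ; 205875000%ZZ; 206000000%ZZ; 206125000%ZZ; 206250000%ZZ; 206375000%ZZ; 206500000%ZZ; 206625000%ZZ; 206750000%ZZ; 206875000%ZZ; 207000000%ZZ; 207125000%ZZ; 207250000%ZZ; 207375000%ZZ; 207500000%ZZ; 207625000%ZZ; 207750000%ZZ; 207875000%ZZ; 208000000%ZZ; 208125000%ZZ; 208250000%ZZ; 208375000%ZZ; 208500000%ZZ; 208625000%ZZ; 208750000%ZZ; 208875000%ZZ; 209000000%ZZ; 209125000%ZZ; 209250000%ZZ; 209375000%ZZ; 209500000%ZZ; 209625000%ZZ; 209750000%ZZ; 209875000%ZZ; 210000000%ZZ; 210125000%ZZ; 210250000%ZZ; 210375000%ZZ; 210500000%ZZ; 210625000%ZZ; 210750000%ZZ; 210875000%ZZ; 211000000%ZZ; 211125000%ZZ;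 211250000%ZZ; 211375000%ZZ; 211500000%ZZ; 211625000%ZZ; 211750000%ZZ; 211875000%ZZ; 212000000%ZZ; 212125000%ZZ; 212250000%ZZ; 212375000%ZZ; 212500000%ZZ; 212625000%ZZ; 212750000%ZZ; 212875000%ZZ; 213000000%ZZ; 213125000%ZZ; 213250000%ZZ; 213375000%ZZ; 213500000%ZZ; 213625000%ZZ; 213750000%ZZ; 213875000%ZZ; 214000000%ZZ; 214125000%ZZ; 214250000%ZZ; 214375000%ZZ; 214500000%ZZ; 214625000%ZZ; 214750000%ZZ; 214875000%ZZ; 215000000%ZZ; 215125000%ZZ; 215250000%ZZ; 215375000%ZZ; 215500000%ZZ; 215625000%ZZ; 215750000%ZZ; 215875000%ZZ; 216000000%ZZ; 216125000%ZZ; 216250000%ZZ; 216375000%ZZ; 216500000%ZZ; 216625000%ZZ; 216750000%ZZ; 216875000%ZZ; 217000000%ZZ; 217125000%ZZ; 217250000%ZZ; 217375000%ZZ; 217500000%ZZ; 217625000%ZZ; 217750000%ZZ; 217875000%ZZ; 218000000%ZZ; 218125000%ZZ; 218250000%ZZ; 218375000%ZZ; 218500000%ZZ; 218625000%ZZ; 218750000%ZZ; 218875000%ZZ; 219000000%ZZ; 219125000%ZZ; 219250000%ZZ; 219375000%ZZ; 219500000%ZZ; 219625000%ZZ; 219750000%ZZ; 219875000%ZZ; 220000000%ZZ; 220125000%ZZ; 220250000%ZZ; 220375000%ZZ; 220500000%ZZ; 220625000%ZZ; 220750000%ZZ; 220875000%ZZ; 221000000%ZZ; 221125000%ZZ;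 221250000%ZZ; 221375000%ZZ; 221500000%ZZ; 221625000%ZZ; 221750000%ZZ; 221875000%ZZ; 222000000%ZZ; 222125000%ZZ; 222250000%ZZ; 222375000%ZZ; 222500000%ZZ; 222625000%ZZ; 222750000%ZZ; 222875000%ZZ; 223000000%ZZ; 223125000%ZZ; 223250000%ZZ; 223375000%ZZ; 223500000%ZZ; 223625000%ZZ; 223750000%ZZ; 223875000%ZZ; 224000000%ZZ; 224125000%ZZ; 224250000%ZZ; 224375000%ZZ; 224500000%ZZ; 224625000%ZZ; 224750000%ZZ; 224875000%ZZ; 225000000%ZZ; 225125000%ZZ; 225250000%ZZ; 225375000%ZZ; 225500000%ZZ; 225625000%ZZ; 225750000%ZZ; 225875000%ZZ; 226000000%ZZ; 226125000%ZZ; 226250000%ZZ; 226375000%ZZ; 226500000%ZZ; 226625000%ZZ; 226750000%ZZ; 226875000%ZZ; 227000000%ZZ; 227125000%ZZ; 227250000%ZZ; 227375000%ZZ; 227500000%ZZ; 227625000%ZZ; 227750000%ZZ; 227875000%ZZ; 228000000%ZZ; 228125000%ZZ; 228250000%ZZ; 228375000%ZZ; 228500000%ZZ; 228625000%ZZ; 228750000%ZZ; 228875000%ZZ; 229000000%ZZ; 229125000%ZZ; 229250000%ZZ; 229375000%ZZ; 229500000%ZZ; 229625000%ZZ; 229750000%ZZ; 229875000%ZZ; 230000000%ZZ; 230125000%ZZ; 230250000%ZZ; 230375000%ZZ; 230500000%ZZ; 230625000%ZZ; 230750000%ZZ; 230875000%ZZ; 231000000%ZZ; 231125000%ZZ;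 231250000%ZZ; 231375000%ZZ; 231500000%ZZ; 231625000%ZZ; 231750000%ZZ; 231875000%ZZ; 232000000%ZZ; 232125000%ZZ; 232250000%ZZ; 232375000%ZZ; 232500000%ZZ; 232625000%ZZ; 232750000%ZZ; 232875000%ZZ; 233000000%ZZ; 233125000%ZZ; 233250000%ZZ; 233375000%ZZ; 233500000%ZZ; 233625000%ZZ; 233750000%ZZ; 233875000%ZZ; 234000000%ZZ; 234125000%ZZ; 234250000%ZZ; 234375000%ZZ; 234500000%ZZ; 234625000%ZZ; 234750000%ZZ; 234875000%ZZ; 235000000%ZZ; 235125000%ZZ; 235250000%ZZ; 235375000%ZZ; 235500000%ZZ; 235625000%ZZ; 235750000%ZZ; 235875000%ZZ; 236000000%ZZ; 236125000%ZZ; 236250000%ZZ; 236375000%ZZ; 236500000%ZZ; 236625000%ZZ; 236750000%ZZ; 236875000%ZZ; 237000000%ZZ; 237125000%ZZ; 237250000%ZZ; 237375000%ZZ; 237500000%ZZ; 237625000%ZZ; 237750000%ZZ; 237875000%ZZ; 238000000%ZZ; 238125000%ZZ; 238250000%ZZ; 238375000%ZZ; 238500000%ZZ; 238625000%ZZ; 238750000%ZZ; 238875000%ZZ; 239000000%ZZ; 239125000%ZZ; 239250000%ZZ; 239375000%ZZ; 239500000%ZZ; 239625000%ZZ; 239750000%ZZ; 239875000%ZZ; 240000000%ZZ; 240125000%ZZ; 240250000%ZZ; 240375000%ZZ; 240500000%ZZ; 240625000%ZZ; 240750000%ZZ; 240875000%ZZ; 241000000%ZZ; 241125000%ZZ;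 241250000%ZZ; 241375000%ZZ; 241500000%ZZ; 241625000%ZZ; 241750000%ZZ; 241875000%ZZ; 242000000%ZZ; 242125000%ZZ; 242250000%ZZ; 242375000%ZZ; 242500000%ZZ; 242625000%ZZ; 242750000%ZZ; 242875000%ZZ; 243000000%ZZ; 243125000%ZZ; 243250000%ZZ; 243375000%ZZ; 243500000%ZZ; 243625000%ZZ; 243750000%ZZ; 243875000%ZZ; 244000000%ZZ; 244125000%ZZ; 244250000%ZZ; 244375000%ZZ; 244500000%ZZ; 244625000%ZZ; 244750000%ZZ; 244875000%ZZ; 245000000%ZZ; 245125000%ZZ; 245250000%ZZ; 245375000%ZZ; 245500000%ZZ; 245625000%ZZ; 245750000%ZZ; 245875000%ZZ; 246000000%ZZ; 246125000%ZZ; 246250000%ZZ; 246375000%ZZ; 246500000%ZZ; 246625000%ZZ; 246750000%ZZ; 246875000%ZZ; 247000000%ZZ; 247125000%ZZ; 247250000%ZZ; 247375000%ZZ; 247500000%ZZ; 247625000%ZZ; 247750000%ZZ; 247875000%ZZ; 248000000%ZZ; 248125000%ZZ; 248250000%ZZ; 248375000%ZZ; 248500000%ZZ; 248625000%ZZ; 248750000%ZZ; 248875000%ZZ; 249000000%ZZ; 249125000%ZZ; 249250000%ZZ; 249375000%ZZ; 249500000%ZZ; 249625000%ZZ; 249750000%ZZ; 249875000%ZZ; 250000000%ZZ].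
Lemma chk_ok : chk Dz Gz atoms (- Dz)%ZZ bps = true.
Proof. vm_compute. reflexivity. Qed.
Lemma Y0_ok : all atom_ok atoms = true.
Proof. vm_compute. reflexivity. Qed.
Lemma mass_ok : Z.leb (sumZ (fun x => x.1.2) atoms) Gz = true.
Proof. vm_compute. reflexivity. Qed.
Lemma last_ok : last (- Dz)%ZZ bps = 250000000%ZZ.
Proof. vm_compute. reflexivity. Qed.

Section Bmax.
Variable R : realDomainType.
Lemma bmax_ge0 (r : seq nat) (F : nat -> R) : 0 <= \big[Num.max/0]_(j <- r) F j.
Proof. elim: r => [|x r IH]; first by rewrite big_nil. by rewrite big_cons le_max IH orbT. Qed.
Lemma bmax_ub (r : seq nat) (F : nat -> R) i : i \in r -> F i <= \big[Num.max/0]_(j <- r) F j.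
Proof.
elim: r => [|x r IH] //; rewrite inE big_cons le_max => /orP [/eqP ->|h].
  by rewrite lexx.
by rewrite IH ?orbT.
Qed.
Lemma bmax_lub (r : seq nat) (F : nat -> R) x : 0 <= x -> (forall i, i \in r -> F i <= x) ->
  \big[Num.max/0]_(j <- r) F j <= x.
Proof.
move=> x0; elim: r => [|y r IH] h; first by rewrite big_nil.
rewrite big_cons ge_max h ?inE ?eqxx //= IH // => i ir; apply: h; by rewrite inE ir orbT.
Qed.
Lemma max0_le (x y : R) : x <= y -> Num.max x 0 <= Num.max y 0.
Proof. move=> h; rewrite ge_max !le_max lexx orbT andbT h //. Qed.
End Bmax.

Section Main.
Variable R : realType.
Local Notation zr := (zR R).
Definition gam : R := 287%:R / 100%:R.


Lemma gam_eq : zr Gz / zr Dz = gam.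
Proof.
have -> : Gz = (287 * 1000000)%ZZ by [].
have -> : Dz = (100 * 1000000)%ZZ by [].
rewrite !zR_mul /gam.
have h : zr 1000000%ZZ != 0.
  rewrite gt_eqF; last by have := @zR_lt R 0%ZZ 1000000%ZZ erefl; rewrite zR0.
  by [].
have -> : zr 287%ZZ = 287%:R by rewrite zRE.
have -> : zr 100%ZZ = 100%:R by rewrite zRE.
by field.
Qed.

Lemma five_half : zr 250000000 / zr Dz = 5%:R / 2%:R.
Proof.
have -> : 250000000%ZZ = (25 * 10000000)%ZZ by [].
have -> : Dz = (10 * 10000000)%ZZ by [].
rewrite !zR_mul.
have h : zr 10000000%ZZ != 0.
  rewrite gt_eqF; last by have := @zR_lt R 0%ZZ 10000000%ZZ erefl; rewrite zR0.
  by [].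
have -> : zr 25%ZZ = 25%:R by rewrite zRE.
have -> : zr 10%ZZ = 10%:R by rewrite zRE.
by field.
Qed.

Lemma mr_all x : x \in atoms -> 0 <= mr R Dz x.
Proof. exact: (@mr_ge0 R Dz atoms erefl Y0_ok). Qed.

Lemma ar_all x : x \in atoms -> 0 <= ar R Dz x.
Proof. exact: (@ar_ge0 R Dz atoms erefl Y0_ok). Qed.

Lemma mass_le : \sum_(x <- atoms) mr R Dz x <= gam.
Proof.
rewrite -gam_eq /mr -mulr_suml -zR_sumZ ler_pM2r ?invr_gt0; last exact: (@Dpos R Dz erefl).
exact: zR_le mass_ok.
Qed.

Lemma Core_all (u : R) : 0 <= u ->
  u ^+ 2 <= gam * (u - 1) ^+ 2 + \sum_(x <- atoms) term R Dz u x.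
Proof.
move=> u0.
have Dp : 0 < zr Dz by exact: (@Dpos R Dz erefl).
case: (lerP u (5%:R / 2%:R)) => hu.
  have := @chk_sound R Dz Gz atoms erefl Y0_ok (- Dz)%ZZ bps chk_ok u.
  rewrite last_ok five_half zR_opp /Core gam_eq; apply => //.
  have -> : - zr Dz / zr Dz = -1 by field; rewrite gt_eqF.
  lra.
have : 0 <= \sum_(x <- atoms) term R Dz u x.
  rewrite big_seq; apply: sumr_ge0 => x xa; exact: (@term_ge0 R Dz atoms erefl Y0_ok u x xa).
rewrite /gam; nra.
Qed.

Lemma monoD (g e dd : R) (P : Z * Z * Z -> bool) (A : Z * Z * Z -> R) :
  e <= dd -> \sum_(x <- atoms) mr R Dz x <= g ->
  g * e + \sum_(x <- atoms) mr R Dz x * (if P x then Num.max (A x - e) 0 else 0)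
  <= g * dd + \sum_(x <- atoms) mr R Dz x * (if P x then Num.max (A x - dd) 0 else 0).
Proof.
move=> ed hg.
have h : \sum_(x <- atoms) mr R Dz x * (if P x then Num.max (A x - e) 0 else 0)
  <= \sum_(x <- atoms) (mr R Dz x * (if P x then Num.max (A x - dd) 0 else 0) + mr R Dz x * (dd - e)).
  rewrite big_seq [X in _ <= X]big_seq; apply: ler_sum => x xa.
  rewrite -mulrDr; apply: ler_wpM2l; first exact: mr_all.
  case: (P x); last lra.
  rewrite ge_max; apply/andP; split.
    have : A x - dd <= Num.max (A x - dd) 0 by rewrite le_max lexx.
    lra.
  have : 0 <= Num.max (A x - dd) 0 by rewrite le_max lexx orbT.
  lra.
move: h; rewrite big_split /= -mulr_suml => h.
have : (\sum_(x <- atoms) mr R Dz x) * (dd - e) <= g * (dd - e).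
  by apply: ler_wpM2r; [lra | exact: hg].
lra.
Qed.

End Main.

Theorem lemma7 (R : realType) (k : nat) (hk : (1 <= k)%N)
    (a d : nat -> R) (f : R) :
  feasible k a d f ->
  0 < f + \sum_(1 <= j < k.+1) d j ->
  objective k a d f <= 287%:R / 100%:R.
Proof.
move=> [Hmono Htri Hf Hnn Hf0] Hden.
rewrite /objective ler_pdivrMr //.
pose s := fun j => Num.sqrt (a j).
pose t := fun j => Num.sqrt (d j).
pose c := \big[Num.max/0]_(j <- index_iota 1 k.+1) (s j - t j).
have sq_a : forall j, (1 <= j <= k)%N -> s j ^+ 2 = a j.
  by move=> j hj; rewrite /s sqr_sqrtr //; case: (Hnn j hj).
have sq_d : forall j, (1 <= j <= k)%N -> t j ^+ 2 = d j.
  by move=> j hj; rewrite /t sqr_sqrtr //; case: (Hnn j hj).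
have s0 : forall j, 0 <= s j by move=> j; exact: sqrtr_ge0.
have t0 : forall j, 0 <= t j by move=> j; exact: sqrtr_ge0.
have c0 : 0 <= c by exact: bmax_ge0.
have cub : forall j, (1 <= j <= k)%N -> s j - t j <= c.
  by move=> j hj; apply: bmax_ub; rewrite mem_index_iota ltnS.
have clb : forall l, (1 <= l <= k)%N -> c <= s l + t l.
  move=> l hl; apply: bmax_lub; first by have := s0 l; have := t0 l; lra.
  move=> i; rewrite mem_index_iota ltnS => hi.
  have := Htri i l hi hl; rewrite -/(s i) -/(s l) -/(t i) -/(t l).
  have := t0 i; lra.
have hd : forall l, (1 <= l <= k)%N -> (s l - c) ^+ 2 <= d l.
  move=> l hl; rewrite -(sq_d l hl); apply: (@sq_le R).
    have := cub l hl; lra.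
  have := clb l hl; lra.
pose T := fun x l => mr R Dz x * (if ar R Dz x * c <= s l
            then Num.max ((ar R Dz x * c) ^+ 2 - d l) 0 else 0).
have point : forall l, (1 <= l <= k)%N -> a l <= gam R * d l + \sum_(x <- atoms) T x l.
  move=> l hl.
  have key : s l ^+ 2 <= gam R * (s l - c) ^+ 2 + \sum_(x <- atoms) mr R Dz x *
      (if ar R Dz x * c <= s l then Num.max ((ar R Dz x * c) ^+ 2 - (s l - c) ^+ 2) 0 else 0).
    case: (ltrP 0 c) => cp.
    - pose u := s l / c.
      have u0 : 0 <= u by rewrite /u divr_ge0 // ltW.
      have := @Core_all R u u0.
      have c2 : 0 < c ^+ 2 by rewrite exprn_gt0.
      move=> H; have := ler_wpM2l (ltW c2) H.
      rewrite mulrDr (mulrCA (c ^+ 2) (gam R)).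
      have -> : c ^+ 2 * u ^+ 2 = s l ^+ 2 by rewrite /u; field; rewrite gt_eqF.
      have -> : c ^+ 2 * (u - 1) ^+ 2 = (s l - c) ^+ 2 by rewrite /u; field; rewrite gt_eqF.
      rewrite mulr_sumr.
      have -> : \sum_(i <- atoms) c ^+ 2 * term R Dz u i = \sum_(x <- atoms) mr R Dz x *
          (if ar R Dz x * c <= s l then Num.max ((ar R Dz x * c) ^+ 2 - (s l - c) ^+ 2) 0 else 0).
        apply: eq_bigr => x _; rewrite /term mulrCA; congr (_ * _).
        rewrite /u ler_pdivlMr //; case: ifP => _; last by rewrite mulr0.
        rewrite maxr_pMr ?(ltW c2) // mulr0; congr (Num.max _ _).
        by field; rewrite gt_eqF.
      done.
    - have -> : c = 0 by lra.
      rewrite subr0.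
      have : 0 <= \sum_(x <- atoms) mr R Dz x *
          (if ar R Dz x * 0 <= s l then Num.max ((ar R Dz x * 0) ^+ 2 - s l ^+ 2) 0 else 0).
        rewrite big_seq; apply: sumr_ge0 => x xa; apply: mulr_ge0; first exact: mr_all.
        by case: ifP => _ //; rewrite le_max lexx orbT.
      have := sqr_ge0 (s l); rewrite /gam; lra.
  have := @monoD R (gam R) _ _ (fun x => ar R Dz x * c <= s l) (fun x => (ar R Dz x * c) ^+ 2)
           (hd l hl) (mass_le R).
  rewrite -(sq_a l hl); lra.
have inner : forall b, 0 <= b -> \sum_(1 <= l < k.+1)
    (if b <= s l then Num.max (b ^+ 2 - d l) 0 else 0) <= f.
  move=> b b0.
  case hh : (has (fun j => b <= s j) (index_iota 1 k.+1)).
  - have exP : exists j, (fun j => (1 <= j < k.+1)%N && (b <= s j)) j.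
      case/hasP: hh => j jin hj; exists j; by rewrite -mem_index_iota jin hj.
    case: (ex_minnP exP) => j /andP [hj1 hj2] hmin.
    have j1 : (1 <= j)%N by case/andP: hj1.
    have jk : (j <= k.+1)%N by case/andP: hj1 => _ /ltnW.
    rewrite (@big_cat_nat _ _ _ j) //=.
    rewrite big_nat_cond big1 ?add0r; last first.
      move=> l /andP [/andP [l1 lj] _]; case: ifP => // hl; exfalso.
      have := hmin l; rewrite l1 hl (leq_trans lj jk) /= => /(_ isT).
      by rewrite leqNgt lj.
    apply: le_trans (Hf j hj1).
    apply: ler_sum_nat => l _.
    case: ifP => _; last by rewrite le_max lexx orbT.
    apply: max0_le; rewrite -(sq_a j hj1).
    have : b ^+ 2 <= s j ^+ 2 by apply: (@sq_le R) => //; have := s0 j; lra.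
    lra.
  - rewrite big_nat_cond big1 //; move=> l /andP [hl _]; case: ifP => // hbl; exfalso.
    move/hasPn: hh => /(_ l); rewrite mem_index_iota hl hbl => /(_ isT).
    done.
have S1 : \sum_(1 <= j < k.+1) a j <= \sum_(1 <= j < k.+1) (gam R * d j + \sum_(x <- atoms) T x j).
  by apply: ler_sum_nat => l hl; apply: point.
rewrite big_split /= -mulr_sumr in S1.
have S2 : \sum_(1 <= i < k.+1) \sum_(x <- atoms) T x i <= gam R * f.
  rewrite exchange_big /=.
  apply: le_trans (_ : \sum_(x <- atoms) mr R Dz x * f <= _).
    rewrite big_seq [X in _ <= X]big_seq; apply: ler_sum => x xa.
    rewrite /T -mulr_sumr; apply: ler_wpM2l; first exact: mr_all.
    apply: inner; apply: mulr_ge0 => //; exact: ar_all.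
  rewrite -mulr_suml; apply: ler_wpM2r => //; exact: mass_le.
move: S1 S2; rewrite /gam; lra.
Qed.
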